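(* Let $\mathcal{P}(3^3)$ be the graph whose vertices are the partitions of $\{1,\ldots,9\}$ into three cells each of size three, two such partitions being adjacent if and only if each cell of one partition contains exactly one point from each cell of the other. Let $S$ be an independent set of size $70$ in $\mathcal{P}(3^3)$. If $\pi\in S$, then there are $36$ partitions $\sigma\in S$ such that the meet $\pi\wedge\sigma$ has $7$ cells, a further $18$ such that $\pi\wedge\sigma$ has $6$ cells, and $15$ such that $\pi\wedge\sigma$ has $5$ cells.
   Context: The meet $\pi\wedge\sigma$ of two partitions is the partition whose cells are the nonempty intersections of a cell of $\pi$ with a cell of $\sigma$. *)

(* Defs.v *)
(* Ground set {1,...,9} is represented by 'I_9 = {0,...,8}. *)
From mathcomp Require Import all_boot.
Set Implicit Arguments. Unset Strict Implicit. Unset Printing Implicit Defensive.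

Definition is_part333 (P : {set {set 'I_9}}) : bool :=
  [&& partition P [set: 'I_9], #|P| == 3 & [forall A in P, #|A| == 3]].

Definition p333_adj (P Q : {set {set 'I_9}}) : bool :=
  [forall A in P, forall B in Q, #|A :&: B| == 1].

Definition meet_part (P Q : {set {set 'I_9}}) : {set {set 'I_9}} :=
  [set A :&: B | A in P, B in Q] :\ set0.

Definition p333_independent (S : {set {set {set 'I_9}}}) : Prop :=
  (forall P, P \in S -> is_part333 P) /\
  (forall P Q, P \in S -> Q \in S -> ~~ p333_adj P Q).

(* Main.v *)
Require Import Defs.
From mathcomp Require Import all_boot.
From mathcomp Require Import zify.
Set Implicit Arguments. Unset Strict Implicit. Unset Printing Implicit Defensive.

(* Partitions are encoded by labellings (seq nat); the 280
   partitions (canonP) and the 840 maximum cliques of P(3^3) (affine planes,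
   planesP) are listed explicitly.  Every plane meets an independent set of
   size 70 exactly once (double counting), and for the fixed partition
   Pl (C a0) suitable weighted double countings over planes, checked by
   computation, determine the numbers of partitions at each meet type.
   The general case is reduced to Pl (C a0) by a permutation of the points. *)
Definition canonP : seq (seq (seq nat)) := [::
[::[::0;0;0;1;1;1;2;2;2]; [::0;0;0;1;1;2;1;2;2]; [::0;0;0;1;1;2;2;1;2]; [::0;0;0;1;1;2;2;2;1]; [::0;0;0;1;2;1;1;2;2]; [::0;0;0;1;2;1;2;1;2]; [::0;0;0;1;2;1;2;2;1]; [::0;0;0;1;2;2;1;1;2]; [::0;0;0;1;2;2;1;2;1]; [::0;0;0;1;2;2;2;1;1]; [::0;0;1;0;1;1;2;2;2]; [::0;0;1;0;1;2;1;2;2]; [::0;0;1;0;1;2;2;1;2]; [::0;0;1;0;1;2;2;2;1]; [::0;0;1;0;2;1;1;2;2]; [::0;0;1;0;2;1;2;1;2]; [::0;0;1;0;2;1;2;2;1]];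
[::[::0;0;1;0;2;2;1;1;2]; [::0;0;1;0;2;2;1;2;1]; [::0;0;1;0;2;2;2;1;1]; [::0;0;1;1;0;1;2;2;2]; [::0;0;1;1;0;2;1;2;2]; [::0;0;1;1;0;2;2;1;2]; [::0;0;1;1;0;2;2;2;1]; [::0;0;1;2;0;1;1;2;2]; [::0;0;1;2;0;1;2;1;2]; [::0;0;1;2;0;1;2;2;1]; [::0;0;1;2;0;2;1;1;2]; [::0;0;1;2;0;2;1;2;1]; [::0;0;1;2;0;2;2;1;1]; [::0;0;1;1;1;0;2;2;2]; [::0;0;1;1;2;0;1;2;2]; [::0;0;1;1;2;0;2;1;2]; [::0;0;1;1;2;0;2;2;1]];
[::[::0;0;1;2;1;0;1;2;2]; [::0;0;1;2;1;0;2;1;2]; [::0;0;1;2;1;0;2;2;1]; [::0;0;1;2;2;0;1;1;2]; [::0;0;1;2;2;0;1;2;1]; [::0;0;1;2;2;0;2;1;1]; [::0;0;1;1;1;2;0;2;2]; [::0;0;1;1;2;1;0;2;2]; [::0;0;1;1;2;2;0;1;2]; [::0;0;1;1;2;2;0;2;1]; [::0;0;1;2;1;1;0;2;2]; [::0;0;1;2;1;2;0;1;2]; [::0;0;1;2;1;2;0;2;1]; [::0;0;1;2;2;1;0;1;2]; [::0;0;1;2;2;1;0;2;1]; [::0;0;1;2;2;2;0;1;1]; [::0;0;1;1;1;2;2;0;2]];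
[::[::0;0;1;1;2;1;2;0;2]; [::0;0;1;1;2;2;1;0;2]; [::0;0;1;1;2;2;2;0;1]; [::0;0;1;2;1;1;2;0;2]; [::0;0;1;2;1;2;1;0;2]; [::0;0;1;2;1;2;2;0;1]; [::0;0;1;2;2;1;1;0;2]; [::0;0;1;2;2;1;2;0;1]; [::0;0;1;2;2;2;1;0;1]; [::0;0;1;1;1;2;2;2;0]; [::0;0;1;1;2;1;2;2;0]; [::0;0;1;1;2;2;1;2;0]; [::0;0;1;1;2;2;2;1;0]; [::0;0;1;2;1;1;2;2;0]; [::0;0;1;2;1;2;1;2;0]; [::0;0;1;2;1;2;2;1;0]; [::0;0;1;2;2;1;1;2;0]];
[::[::0;0;1;2;2;1;2;1;0]; [::0;0;1;2;2;2;1;1;0]; [::0;1;0;0;1;1;2;2;2]; [::0;1;0;0;1;2;1;2;2]; [::0;1;0;0;1;2;2;1;2]; [::0;1;0;0;1;2;2;2;1]; [::0;1;0;0;2;1;1;2;2]; [::0;1;0;0;2;1;2;1;2]; [::0;1;0;0;2;1;2;2;1]; [::0;1;0;0;2;2;1;1;2]; [::0;1;0;0;2;2;1;2;1]; [::0;1;0;0;2;2;2;1;1]; [::0;1;0;1;0;1;2;2;2]; [::0;1;0;1;0;2;1;2;2]; [::0;1;0;1;0;2;2;1;2]; [::0;1;0;1;0;2;2;2;1]; [::0;1;0;2;0;1;1;2;2]];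
[::[::0;1;0;2;0;1;2;1;2]; [::0;1;0;2;0;1;2;2;1]; [::0;1;0;2;0;2;1;1;2]; [::0;1;0;2;0;2;1;2;1]; [::0;1;0;2;0;2;2;1;1]; [::0;1;0;1;1;0;2;2;2]; [::0;1;0;1;2;0;1;2;2]; [::0;1;0;1;2;0;2;1;2]; [::0;1;0;1;2;0;2;2;1]; [::0;1;0;2;1;0;1;2;2]; [::0;1;0;2;1;0;2;1;2]; [::0;1;0;2;1;0;2;2;1]; [::0;1;0;2;2;0;1;1;2]; [::0;1;0;2;2;0;1;2;1]; [::0;1;0;2;2;0;2;1;1]; [::0;1;0;1;1;2;0;2;2]; [::0;1;0;1;2;1;0;2;2]];
[::[::0;1;0;1;2;2;0;1;2]; [::0;1;0;1;2;2;0;2;1]; [::0;1;0;2;1;1;0;2;2]; [::0;1;0;2;1;2;0;1;2]; [::0;1;0;2;1;2;0;2;1]; [::0;1;0;2;2;1;0;1;2]; [::0;1;0;2;2;1;0;2;1]; [::0;1;0;2;2;2;0;1;1]; [::0;1;0;1;1;2;2;0;2]; [::0;1;0;1;2;1;2;0;2]; [::0;1;0;1;2;2;1;0;2]; [::0;1;0;1;2;2;2;0;1]; [::0;1;0;2;1;1;2;0;2]; [::0;1;0;2;1;2;1;0;2]; [::0;1;0;2;1;2;2;0;1]; [::0;1;0;2;2;1;1;0;2]; [::0;1;0;2;2;1;2;0;1]];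
[::[::0;1;0;2;2;2;1;0;1]; [::0;1;0;1;1;2;2;2;0]; [::0;1;0;1;2;1;2;2;0]; [::0;1;0;1;2;2;1;2;0]; [::0;1;0;1;2;2;2;1;0]; [::0;1;0;2;1;1;2;2;0]; [::0;1;0;2;1;2;1;2;0]; [::0;1;0;2;1;2;2;1;0]; [::0;1;0;2;2;1;1;2;0]; [::0;1;0;2;2;1;2;1;0]; [::0;1;0;2;2;2;1;1;0]; [::0;1;1;0;0;1;2;2;2]; [::0;1;1;0;0;2;1;2;2]; [::0;1;1;0;0;2;2;1;2]; [::0;1;1;0;0;2;2;2;1]; [::0;1;2;0;0;1;1;2;2]; [::0;1;2;0;0;1;2;1;2]];
[::[::0;1;2;0;0;1;2;2;1]; [::0;1;2;0;0;2;1;1;2]; [::0;1;2;0;0;2;1;2;1]; [::0;1;2;0;0;2;2;1;1]; [::0;1;1;0;1;0;2;2;2]; [::0;1;1;0;2;0;1;2;2]; [::0;1;1;0;2;0;2;1;2]; [::0;1;1;0;2;0;2;2;1]; [::0;1;2;0;1;0;1;2;2]; [::0;1;2;0;1;0;2;1;2]; [::0;1;2;0;1;0;2;2;1]; [::0;1;2;0;2;0;1;1;2]; [::0;1;2;0;2;0;1;2;1]; [::0;1;2;0;2;0;2;1;1]; [::0;1;1;0;1;2;0;2;2]; [::0;1;1;0;2;1;0;2;2]; [::0;1;1;0;2;2;0;1;2]];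
[::[::0;1;1;0;2;2;0;2;1]; [::0;1;2;0;1;1;0;2;2]; [::0;1;2;0;1;2;0;1;2]; [::0;1;2;0;1;2;0;2;1]; [::0;1;2;0;2;1;0;1;2]; [::0;1;2;0;2;1;0;2;1]; [::0;1;2;0;2;2;0;1;1]; [::0;1;1;0;1;2;2;0;2]; [::0;1;1;0;2;1;2;0;2]; [::0;1;1;0;2;2;1;0;2]; [::0;1;1;0;2;2;2;0;1]; [::0;1;2;0;1;1;2;0;2]; [::0;1;2;0;1;2;1;0;2]; [::0;1;2;0;1;2;2;0;1]; [::0;1;2;0;2;1;1;0;2]; [::0;1;2;0;2;1;2;0;1]; [::0;1;2;0;2;2;1;0;1]];
[::[::0;1;1;0;1;2;2;2;0]; [::0;1;1;0;2;1;2;2;0]; [::0;1;1;0;2;2;1;2;0]; [::0;1;1;0;2;2;2;1;0]; [::0;1;2;0;1;1;2;2;0]; [::0;1;2;0;1;2;1;2;0]; [::0;1;2;0;1;2;2;1;0]; [::0;1;2;0;2;1;1;2;0]; [::0;1;2;0;2;1;2;1;0]; [::0;1;2;0;2;2;1;1;0]; [::0;1;1;1;0;0;2;2;2]; [::0;1;1;2;0;0;1;2;2]; [::0;1;1;2;0;0;2;1;2]; [::0;1;1;2;0;0;2;2;1]; [::0;1;2;1;0;0;1;2;2]; [::0;1;2;1;0;0;2;1;2]; [::0;1;2;1;0;0;2;2;1]];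
[::[::0;1;2;2;0;0;1;1;2]; [::0;1;2;2;0;0;1;2;1]; [::0;1;2;2;0;0;2;1;1]; [::0;1;1;1;0;2;0;2;2]; [::0;1;1;2;0;1;0;2;2]; [::0;1;1;2;0;2;0;1;2]; [::0;1;1;2;0;2;0;2;1]; [::0;1;2;1;0;1;0;2;2]; [::0;1;2;1;0;2;0;1;2]; [::0;1;2;1;0;2;0;2;1]; [::0;1;2;2;0;1;0;1;2]; [::0;1;2;2;0;1;0;2;1]; [::0;1;2;2;0;2;0;1;1]; [::0;1;1;1;0;2;2;0;2]; [::0;1;1;2;0;1;2;0;2]; [::0;1;1;2;0;2;1;0;2]; [::0;1;1;2;0;2;2;0;1]];
[::[::0;1;2;1;0;1;2;0;2]; [::0;1;2;1;0;2;1;0;2]; [::0;1;2;1;0;2;2;0;1]; [::0;1;2;2;0;1;1;0;2]; [::0;1;2;2;0;1;2;0;1]; [::0;1;2;2;0;2;1;0;1]; [::0;1;1;1;0;2;2;2;0]; [::0;1;1;2;0;1;2;2;0]; [::0;1;1;2;0;2;1;2;0]; [::0;1;1;2;0;2;2;1;0]; [::0;1;2;1;0;1;2;2;0]; [::0;1;2;1;0;2;1;2;0]; [::0;1;2;1;0;2;2;1;0]; [::0;1;2;2;0;1;1;2;0]; [::0;1;2;2;0;1;2;1;0]; [::0;1;2;2;0;2;1;1;0]; [::0;1;1;1;2;0;0;2;2]];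
[::[::0;1;1;2;1;0;0;2;2]; [::0;1;1;2;2;0;0;1;2]; [::0;1;1;2;2;0;0;2;1]; [::0;1;2;1;1;0;0;2;2]; [::0;1;2;1;2;0;0;1;2]; [::0;1;2;1;2;0;0;2;1]; [::0;1;2;2;1;0;0;1;2]; [::0;1;2;2;1;0;0;2;1]; [::0;1;2;2;2;0;0;1;1]; [::0;1;1;1;2;0;2;0;2]; [::0;1;1;2;1;0;2;0;2]; [::0;1;1;2;2;0;1;0;2]; [::0;1;1;2;2;0;2;0;1]; [::0;1;2;1;1;0;2;0;2]; [::0;1;2;1;2;0;1;0;2]; [::0;1;2;1;2;0;2;0;1]; [::0;1;2;2;1;0;1;0;2]];
[::[::0;1;2;2;1;0;2;0;1]; [::0;1;2;2;2;0;1;0;1]; [::0;1;1;1;2;0;2;2;0]; [::0;1;1;2;1;0;2;2;0]; [::0;1;1;2;2;0;1;2;0]; [::0;1;1;2;2;0;2;1;0]; [::0;1;2;1;1;0;2;2;0]; [::0;1;2;1;2;0;1;2;0]; [::0;1;2;1;2;0;2;1;0]; [::0;1;2;2;1;0;1;2;0]; [::0;1;2;2;1;0;2;1;0]; [::0;1;2;2;2;0;1;1;0]; [::0;1;1;1;2;2;0;0;2]; [::0;1;1;2;1;2;0;0;2]; [::0;1;1;2;2;1;0;0;2]; [::0;1;1;2;2;2;0;0;1]; [::0;1;2;1;1;2;0;0;2]];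
[::[::0;1;2;1;2;1;0;0;2]; [::0;1;2;1;2;2;0;0;1]; [::0;1;2;2;1;1;0;0;2]; [::0;1;2;2;1;2;0;0;1]; [::0;1;2;2;2;1;0;0;1]; [::0;1;1;1;2;2;0;2;0]; [::0;1;1;2;1;2;0;2;0]; [::0;1;1;2;2;1;0;2;0]; [::0;1;1;2;2;2;0;1;0]; [::0;1;2;1;1;2;0;2;0]; [::0;1;2;1;2;1;0;2;0]; [::0;1;2;1;2;2;0;1;0]; [::0;1;2;2;1;1;0;2;0]; [::0;1;2;2;1;2;0;1;0]; [::0;1;2;2;2;1;0;1;0]; [::0;1;1;1;2;2;2;0;0]; [::0;1;1;2;1;2;2;0;0]];
[::[::0;1;1;2;2;1;2;0;0]; [::0;1;1;2;2;2;1;0;0]; [::0;1;2;1;1;2;2;0;0]; [::0;1;2;1;2;1;2;0;0]; [::0;1;2;1;2;2;1;0;0]; [::0;1;2;2;1;1;2;0;0]; [::0;1;2;2;1;2;1;0;0]; [::0;1;2;2;2;1;1;0;0]]].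

Definition planesP : seq (seq (nat * nat)) := [::
[::(0,0);(9,2);(12,13);(13,15)];
[::(0,0);(9,3);(12,3);(14,8)];
[::(0,0);(9,4);(12,2);(14,9)];
[::(0,0);(9,5);(12,12);(13,16)];
[::(0,0);(9,12);(12,14);(13,5)];
[::(0,0);(9,13);(11,10);(14,7)];
[::(0,0);(9,14);(11,9);(14,10)];
[::(0,0);(9,15);(12,11);(13,6)];
[::(0,0);(10,5);(12,4);(13,4)];
[::(0,0);(10,6);(11,11);(13,14)];
[::(0,0);(10,7);(11,8);(14,0)];
[::(0,0);(10,8);(12,1);(13,7)];
[::(0,1);(8,9);(12,13);(15,1)];
[::(0,1);(8,10);(12,3);(15,11)];
[::(0,1);(8,11);(12,2);(15,12)];
[::(0,1);(8,12);(12,12);(15,2)];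
[::(0,1);(9,11);(12,15);(13,5)];
[::(0,1);(9,13);(11,0);(15,10)];
[::(0,1);(9,14);(10,16);(15,13)];
[::(0,1);(9,16);(12,10);(13,6)];
[::(0,1);(10,4);(12,5);(13,4)];
[::(0,1);(10,6);(11,1);(15,0)];
[::(0,1);(10,7);(10,15);(15,3)];
[::(0,1);(10,9);(12,0);(13,7)];
[::(0,2);(8,8);(12,14);(15,1)];
[::(0,2);(8,10);(11,10);(16,4)];
[::(0,2);(8,11);(11,9);(16,5)];
[::(0,2);(8,13);(12,11);(15,2)];
[::(0,2);(9,1);(12,15);(13,15)];
[::(0,2);(9,3);(11,0);(16,3)];
[::(0,2);(9,4);(10,16);(16,6)];
[::(0,2);(9,6);(12,10);(13,16)];
[::(0,2);(10,4);(11,12);(13,14)];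
[::(0,2);(10,5);(11,2);(15,0)];
[::(0,2);(10,8);(10,14);(15,3)];
[::(0,2);(10,9);(11,7);(14,0)];
[::(0,3);(8,8);(12,4);(15,11)];
[::(0,3);(8,9);(11,11);(16,4)];
[::(0,3);(8,12);(11,8);(16,5)];
[::(0,3);(8,13);(12,1);(15,12)];
[::(0,3);(9,1);(12,5);(14,8)];
[::(0,3);(9,2);(11,1);(16,3)];
[::(0,3);(9,5);(10,15);(16,6)];
[::(0,3);(9,6);(12,0);(14,9)];
[::(0,3);(9,11);(11,12);(14,7)];
[::(0,3);(9,12);(11,2);(15,10)];
[::(0,3);(9,15);(10,14);(15,13)];
[::(0,3);(9,16);(11,7);(14,10)];
[::(0,4);(7,16);(14,9);(15,1)];
[::(0,4);(8,0);(13,16);(15,11)];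
[::(0,4);(8,1);(13,15);(15,12)];
[::(0,4);(8,2);(14,8);(15,2)];
[::(0,4);(9,11);(11,9);(14,11)];
[::(0,4);(9,12);(10,16);(15,14)];
[::(0,4);(9,15);(11,0);(15,9)];
[::(0,4);(9,16);(11,10);(14,6)];
[::(0,4);(10,4);(11,8);(14,1)];
[::(0,4);(10,5);(10,15);(15,4)];
[::(0,4);(10,8);(11,1);(14,16)];
[::(0,4);(10,9);(11,11);(13,13)];
[::(0,5);(7,15);(14,10);(15,1)];
[::(0,5);(8,0);(13,6);(16,4)];
[::(0,5);(8,1);(13,5);(16,5)];
[::(0,5);(8,3);(14,7);(15,2)];
[::(0,5);(9,1);(12,2);(14,11)];
[::(0,5);(9,2);(10,16);(16,7)];
[::(0,5);(9,5);(11,0);(16,2)];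
[::(0,5);(9,6);(12,3);(14,6)];
[::(0,5);(10,4);(12,1);(13,8)];
[::(0,5);(10,6);(10,14);(15,4)];
[::(0,5);(10,7);(11,2);(14,16)];
[::(0,5);(10,9);(12,4);(13,3)];
[::(0,6);(7,15);(14,0);(15,11)];
[::(0,6);(7,16);(13,7);(16,4)];
[::(0,6);(8,2);(13,4);(16,5)];
[::(0,6);(8,3);(13,14);(15,12)];
[::(0,6);(9,1);(12,12);(14,1)];
[::(0,6);(9,3);(10,15);(16,7)];
[::(0,6);(9,4);(11,1);(16,2)];
[::(0,6);(9,6);(12,13);(13,13)];
[::(0,6);(9,11);(12,11);(13,8)];
[::(0,6);(9,13);(10,14);(15,14)];
[::(0,6);(9,14);(11,2);(15,9)];
[::(0,6);(9,16);(12,14);(13,3)];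
[::(0,7);(7,15);(13,15);(15,13)];
[::(0,7);(7,16);(13,5);(16,6)];
[::(0,7);(8,2);(13,6);(16,3)];
[::(0,7);(8,3);(13,16);(15,10)];
[::(0,7);(8,8);(12,2);(15,14)];
[::(0,7);(8,9);(11,9);(16,7)];
[::(0,7);(8,12);(11,10);(16,2)];
[::(0,7);(8,13);(12,3);(15,9)];
[::(0,7);(10,5);(12,0);(13,8)];
[::(0,7);(10,6);(11,7);(14,1)];
[::(0,7);(10,7);(11,12);(13,13)];
[::(0,7);(10,8);(12,5);(13,3)];
[::(0,8);(7,15);(14,8);(15,3)];
[::(0,8);(8,0);(13,4);(16,6)];
[::(0,8);(8,1);(13,7);(16,3)];
[::(0,8);(8,3);(14,9);(15,0)];
[::(0,8);(8,8);(12,12);(15,4)];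
[::(0,8);(8,10);(11,8);(16,7)];
[::(0,8);(8,11);(11,11);(16,2)];
[::(0,8);(8,13);(12,13);(14,16)];
[::(0,8);(9,12);(12,10);(13,8)];
[::(0,8);(9,13);(11,7);(14,11)];
[::(0,8);(9,14);(11,12);(14,6)];
[::(0,8);(9,15);(12,15);(13,3)];
[::(0,9);(7,16);(14,7);(15,3)];
[::(0,9);(8,0);(13,14);(15,13)];
[::(0,9);(8,1);(14,0);(15,10)];
[::(0,9);(8,2);(14,10);(15,0)];
[::(0,9);(8,9);(12,11);(15,4)];
[::(0,9);(8,10);(12,1);(15,14)];
[::(0,9);(8,11);(12,4);(15,9)];
[::(0,9);(8,12);(12,14);(14,16)];
[::(0,9);(9,2);(12,10);(14,1)];
[::(0,9);(9,3);(12,0);(14,11)];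
[::(0,9);(9,4);(12,5);(14,6)];
[::(0,9);(9,5);(12,15);(13,13)];
[::(0,10);(6,3);(12,13);(13,12)];
[::(0,10);(6,4);(12,3);(14,5)];
[::(0,10);(6,5);(11,16);(14,9)];
[::(0,10);(6,6);(12,9);(13,16)];
[::(0,10);(6,13);(12,14);(13,2)];
[::(0,10);(6,14);(11,10);(14,4)];
[::(0,10);(6,15);(11,6);(14,10)];
[::(0,10);(6,16);(12,8);(13,6)];
[::(0,10);(7,6);(12,4);(13,1)];
[::(0,10);(7,7);(11,11);(13,11)];
[::(0,10);(7,8);(11,5);(14,0)];
[::(0,10);(7,9);(11,15);(13,7)];
[::(0,11);(5,10);(12,13);(14,15)];
[::(0,11);(5,11);(12,3);(15,8)];
[::(0,11);(5,12);(11,16);(15,12)];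
[::(0,11);(5,13);(12,9);(15,2)];
[::(0,11);(6,12);(12,15);(13,2)];
[::(0,11);(6,14);(11,0);(15,7)];
[::(0,11);(6,15);(10,13);(15,13)];
[::(0,11);(7,0);(12,7);(13,6)];
[::(0,11);(7,5);(12,5);(13,1)];
[::(0,11);(7,7);(11,1);(14,14)];
[::(0,11);(7,8);(10,12);(15,3)];
[::(0,11);(7,10);(11,14);(13,7)];
[::(0,12);(5,9);(12,14);(14,15)];
[::(0,12);(5,11);(11,10);(16,1)];
[::(0,12);(5,12);(11,6);(16,5)];
[::(0,12);(5,14);(12,8);(15,2)];
[::(0,12);(6,2);(12,15);(13,12)];
[::(0,12);(6,4);(11,0);(16,0)];
[::(0,12);(6,5);(10,13);(16,6)];
[::(0,12);(6,7);(12,7);(13,16)];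
[::(0,12);(7,5);(11,12);(13,11)];
[::(0,12);(7,6);(11,2);(14,14)];
[::(0,12);(7,9);(10,11);(15,3)];
[::(0,12);(7,10);(11,4);(14,0)];
[::(0,13);(5,9);(12,4);(15,8)];
[::(0,13);(5,10);(11,11);(16,1)];
[::(0,13);(5,13);(11,5);(16,5)];
[::(0,13);(5,14);(11,15);(15,12)];
[::(0,13);(6,2);(12,5);(14,5)];
[::(0,13);(6,3);(11,1);(16,0)];
[::(0,13);(6,6);(10,12);(16,6)];
[::(0,13);(6,7);(11,14);(14,9)];
[::(0,13);(6,12);(11,12);(14,4)];
[::(0,13);(6,13);(11,2);(15,7)];
[::(0,13);(6,16);(10,11);(15,13)];
[::(0,13);(7,0);(11,4);(14,10)];
[::(0,14);(5,0);(14,9);(14,15)];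
[::(0,14);(5,1);(13,16);(15,8)];
[::(0,14);(5,2);(13,12);(15,12)];
[::(0,14);(5,3);(14,5);(15,2)];
[::(0,14);(6,12);(11,6);(14,11)];
[::(0,14);(6,13);(10,13);(15,14)];
[::(0,14);(6,16);(11,0);(15,6)];
[::(0,14);(7,0);(11,10);(14,3)];
[::(0,14);(7,5);(11,5);(14,1)];
[::(0,14);(7,6);(10,12);(15,4)];
[::(0,14);(7,9);(11,1);(14,13)];
[::(0,14);(7,10);(11,11);(13,10)];
[::(0,15);(4,16);(14,10);(14,15)];
[::(0,15);(5,1);(13,6);(16,1)];
[::(0,15);(5,2);(13,2);(16,5)];
[::(0,15);(5,4);(14,4);(15,2)];
[::(0,15);(6,2);(11,16);(14,11)];
[::(0,15);(6,3);(10,13);(16,7)];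
[::(0,15);(6,6);(11,0);(15,16)];
[::(0,15);(6,7);(12,3);(14,3)];
[::(0,15);(7,5);(11,15);(13,8)];
[::(0,15);(7,7);(10,11);(15,4)];
[::(0,15);(7,8);(11,2);(14,13)];
[::(0,15);(7,10);(12,4);(13,0)];
[::(0,16);(4,16);(14,0);(15,8)];
[::(0,16);(5,0);(13,7);(16,1)];
[::(0,16);(5,3);(13,1);(16,5)];
[::(0,16);(5,4);(13,11);(15,12)];
[::(0,16);(6,2);(12,9);(14,1)];
[::(0,16);(6,4);(10,12);(16,7)];
[::(0,16);(6,5);(11,1);(15,16)];
[::(0,16);(6,7);(12,13);(13,10)];
[::(0,16);(6,12);(12,8);(13,8)];
[::(0,16);(6,14);(10,11);(15,14)];
[::(0,16);(6,15);(11,2);(15,6)];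
[::(0,16);(7,0);(12,14);(13,0)];
[::(1,0);(4,16);(13,12);(15,13)];
[::(1,0);(5,0);(13,2);(16,6)];
[::(1,0);(5,3);(13,6);(16,0)];
[::(1,0);(5,4);(13,16);(15,7)];
[::(1,0);(5,9);(11,16);(15,14)];
[::(1,0);(5,10);(11,6);(16,7)];
[::(1,0);(5,13);(11,10);(15,16)];
[::(1,0);(5,14);(12,3);(15,6)];
[::(1,0);(7,6);(11,14);(13,8)];
[::(1,0);(7,7);(11,4);(14,1)];
[::(1,0);(7,8);(11,12);(13,10)];
[::(1,0);(7,9);(12,5);(13,0)];
[::(1,1);(4,16);(14,5);(15,3)];
[::(1,1);(5,1);(13,1);(16,6)];
[::(1,1);(5,2);(13,7);(16,0)];
[::(1,1);(5,4);(14,9);(14,14)];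
[::(1,1);(5,9);(12,9);(15,4)];
[::(1,1);(5,11);(11,5);(16,7)];
[::(1,1);(5,12);(11,11);(15,16)];
[::(1,1);(5,14);(12,13);(14,13)];
[::(1,1);(6,13);(12,7);(13,8)];
[::(1,1);(6,14);(11,4);(14,11)];
[::(1,1);(6,15);(11,12);(14,3)];
[::(1,1);(6,16);(12,15);(13,0)];
[::(1,2);(5,0);(14,4);(15,3)];
[::(1,2);(5,1);(13,11);(15,13)];
[::(1,2);(5,2);(14,0);(15,7)];
[::(1,2);(5,3);(14,10);(14,14)];
[::(1,2);(5,10);(12,8);(15,4)];
[::(1,2);(5,11);(11,15);(15,14)];
[::(1,2);(5,12);(12,4);(15,6)];
[::(1,2);(5,13);(12,14);(14,13)];
[::(1,2);(6,3);(12,7);(14,1)];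
[::(1,2);(6,4);(11,14);(14,11)];
[::(1,2);(6,5);(12,5);(14,3)];
[::(1,2);(6,6);(12,15);(13,10)];
[::(1,3);(6,0);(10,7);(13,12)];
[::(1,3);(6,1);(9,14);(14,5)];
[::(1,3);(6,5);(9,10);(14,7)];
[::(1,3);(6,6);(10,3);(13,14)];
[::(1,3);(6,10);(10,8);(13,2)];
[::(1,3);(6,11);(9,4);(14,4)];
[::(1,3);(6,15);(9,0);(14,8)];
[::(1,3);(6,16);(10,2);(13,4)];
[::(1,3);(7,3);(9,15);(13,1)];
[::(1,3);(7,4);(9,5);(13,11)];
[::(1,3);(7,8);(8,16);(13,15)];
[::(1,3);(7,9);(9,9);(13,5)];
[::(1,4);(5,7);(10,7);(14,15)];
[::(1,4);(5,8);(9,14);(15,8)];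
[::(1,4);(5,12);(9,10);(15,10)];
[::(1,4);(5,13);(10,3);(15,0)];
[::(1,4);(6,9);(10,9);(13,2)];
[::(1,4);(6,11);(8,11);(15,7)];
[::(1,4);(6,15);(8,7);(15,11)];
[::(1,4);(7,0);(10,1);(13,4)];
[::(1,4);(7,2);(9,16);(13,1)];
[::(1,4);(7,4);(8,12);(14,14)];
[::(1,4);(7,8);(8,6);(15,1)];
[::(1,4);(7,10);(9,8);(13,5)];
[::(1,5);(5,6);(10,8);(14,15)];
[::(1,5);(5,8);(9,4);(16,1)];
[::(1,5);(5,12);(9,0);(16,3)];
[::(1,5);(5,14);(10,2);(15,0)];
[::(1,5);(5,16);(10,9);(13,12)];
[::(1,5);(6,1);(8,11);(16,0)];
[::(1,5);(6,5);(8,7);(16,4)];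
[::(1,5);(6,7);(10,1);(13,14)];
[::(1,5);(7,2);(9,6);(13,11)];
[::(1,5);(7,3);(8,13);(14,14)];
[::(1,5);(7,9);(8,5);(15,1)];
[::(1,5);(7,10);(8,15);(13,15)];
[::(1,6);(5,6);(9,15);(15,8)];
[::(1,6);(5,7);(9,5);(16,1)];
[::(1,6);(5,13);(8,16);(16,3)];
[::(1,6);(5,14);(9,9);(15,10)];
[::(1,6);(5,16);(9,16);(14,5)];
[::(1,6);(6,0);(8,12);(16,0)];
[::(1,6);(6,6);(8,6);(16,4)];
[::(1,6);(6,7);(9,8);(14,7)];
[::(1,6);(6,9);(9,6);(14,4)];
[::(1,6);(6,10);(8,13);(15,7)];
[::(1,6);(6,16);(8,5);(15,11)];
[::(1,6);(7,0);(8,15);(14,8)];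
[::(1,7);(4,7);(14,7);(14,15)];
[::(1,7);(4,8);(13,14);(15,8)];
[::(1,7);(4,9);(13,12);(15,10)];
[::(1,7);(4,10);(14,5);(15,0)];
[::(1,7);(6,9);(9,0);(14,11)];
[::(1,7);(6,10);(8,7);(15,14)];
[::(1,7);(6,16);(8,11);(15,5)];
[::(1,7);(7,0);(9,4);(14,2)];
[::(1,7);(7,2);(8,16);(14,1)];
[::(1,7);(7,3);(8,6);(15,4)];
[::(1,7);(7,9);(8,12);(14,12)];
[::(1,7);(7,10);(9,5);(13,9)];
[::(1,8);(4,6);(14,8);(14,15)];
[::(1,8);(4,8);(13,4);(16,1)];
[::(1,8);(4,9);(13,2);(16,3)];
[::(1,8);(4,11);(14,4);(15,0)];
[::(1,8);(5,16);(9,10);(14,11)];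
[::(1,8);(6,0);(8,7);(16,7)];
[::(1,8);(6,6);(8,11);(15,15)];
[::(1,8);(6,7);(9,14);(14,2)];
[::(1,8);(7,2);(9,9);(13,8)];
[::(1,8);(7,4);(8,5);(15,4)];
[::(1,8);(7,8);(8,13);(14,12)];
[::(1,8);(7,10);(9,15);(12,16)];
[::(1,9);(4,6);(13,15);(15,8)];
[::(1,9);(4,7);(13,5);(16,1)];
[::(1,9);(4,10);(13,1);(16,3)];
[::(1,9);(4,11);(13,11);(15,10)];
[::(1,9);(5,16);(10,3);(14,1)];
[::(1,9);(6,1);(8,6);(16,7)];
[::(1,9);(6,5);(8,12);(15,15)];
[::(1,9);(6,7);(10,7);(13,9)];
[::(1,9);(6,9);(10,2);(13,8)];
[::(1,9);(6,11);(8,5);(15,14)];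
[::(1,9);(6,15);(8,13);(15,5)];
[::(1,9);(7,0);(10,8);(12,16)];
[::(1,10);(4,6);(13,12);(15,11)];
[::(1,10);(4,7);(13,2);(16,4)];
[::(1,10);(4,10);(13,4);(16,0)];
[::(1,10);(4,11);(13,14);(15,7)];
[::(1,10);(5,6);(9,10);(15,14)];
[::(1,10);(5,7);(9,0);(16,7)];
[::(1,10);(5,13);(9,4);(15,15)];
[::(1,10);(5,14);(9,14);(15,5)];
[::(1,10);(7,3);(9,8);(13,8)];
[::(1,10);(7,4);(8,15);(14,1)];
[::(1,10);(7,8);(9,6);(13,9)];
[::(1,10);(7,9);(9,16);(12,16)];
[::(1,11);(4,6);(14,5);(15,1)];
[::(1,11);(4,8);(13,1);(16,4)];
[::(1,11);(4,9);(13,5);(16,0)];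
[::(1,11);(4,11);(14,7);(14,14)];
[::(1,11);(5,6);(10,3);(15,4)];
[::(1,11);(5,8);(8,16);(16,7)];
[::(1,11);(5,12);(9,5);(15,15)];
[::(1,11);(5,14);(10,7);(14,12)];
[::(1,11);(6,10);(10,1);(13,8)];
[::(1,11);(6,11);(8,15);(14,11)];
[::(1,11);(6,15);(9,6);(14,2)];
[::(1,11);(6,16);(10,9);(12,16)];
[::(1,12);(4,7);(14,4);(15,1)];
[::(1,12);(4,8);(13,11);(15,11)];
[::(1,12);(4,9);(13,15);(15,7)];
[::(1,12);(4,10);(14,8);(14,14)];
[::(1,12);(5,7);(10,2);(15,4)];
[::(1,12);(5,8);(9,9);(15,14)];
[::(1,12);(5,12);(9,15);(15,5)];
[::(1,12);(5,13);(10,8);(14,12)];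
[::(1,12);(6,0);(10,1);(14,1)];
[::(1,12);(6,1);(9,8);(14,11)];
[::(1,12);(6,5);(9,16);(14,2)];
[::(1,12);(6,6);(10,9);(13,9)];
[::(1,13);(6,0);(10,5);(11,16)];
[::(1,13);(6,1);(9,12);(12,9)];
[::(1,13);(6,3);(9,10);(12,11)];
[::(1,13);(6,4);(10,3);(12,1)];
[::(1,13);(6,10);(10,6);(11,6)];
[::(1,13);(6,11);(9,2);(12,8)];
[::(1,13);(6,13);(9,0);(12,12)];
[::(1,13);(6,14);(10,2);(11,8)];
[::(1,13);(7,3);(9,13);(11,5)];
[::(1,13);(7,4);(9,3);(11,15)];
[::(1,13);(7,6);(8,16);(12,2)];
[::(1,13);(7,7);(9,9);(11,9)];
[::(1,14);(4,14);(10,5);(14,15)];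
[::(1,14);(4,15);(9,12);(15,8)];
[::(1,14);(5,2);(9,10);(15,9)];
[::(1,14);(5,3);(10,3);(14,16)];
[::(1,14);(6,8);(10,9);(11,6)];
[::(1,14);(6,11);(8,1);(15,6)];
[::(1,14);(6,13);(7,14);(15,11)];
[::(1,14);(7,0);(10,0);(11,8)];
[::(1,14);(7,1);(9,16);(11,5)];
[::(1,14);(7,4);(8,2);(14,13)];
[::(1,14);(7,6);(7,13);(15,1)];
[::(1,14);(7,10);(9,7);(11,9)];
[::(1,15);(4,13);(10,6);(14,15)];
[::(1,15);(4,15);(9,2);(16,1)];
[::(1,15);(5,2);(9,0);(16,2)];
[::(1,15);(5,4);(10,2);(14,16)];
[::(1,15);(5,15);(10,9);(11,16)];
[::(1,15);(6,1);(8,1);(15,16)];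
[::(1,15);(6,3);(7,14);(16,4)];
[::(1,15);(6,7);(10,0);(12,1)];
[::(1,15);(7,1);(9,6);(11,15)];
[::(1,15);(7,3);(8,3);(14,13)];
[::(1,15);(7,7);(7,12);(15,1)];
[::(1,15);(7,10);(8,14);(12,2)];
[::(1,16);(4,13);(9,13);(15,8)];
[::(1,16);(4,14);(9,3);(16,1)];
[::(1,16);(5,3);(8,16);(16,2)];
[::(1,16);(5,4);(9,9);(15,9)];
[::(1,16);(5,15);(9,16);(12,9)];
[::(1,16);(6,0);(8,2);(15,16)];
[::(1,16);(6,4);(7,13);(16,4)];
[::(1,16);(6,7);(9,7);(12,11)];
[::(1,16);(6,8);(9,6);(12,8)];
[::(1,16);(6,10);(8,3);(15,6)];
[::(1,16);(6,14);(7,12);(15,11)];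
[::(1,16);(7,0);(8,14);(12,12)];
[::(2,0);(4,4);(12,11);(14,15)];
[::(2,0);(4,5);(12,1);(15,8)];
[::(2,0);(4,9);(11,16);(15,9)];
[::(2,0);(4,10);(12,9);(14,16)];
[::(2,0);(6,8);(9,0);(12,15)];
[::(2,0);(6,10);(7,14);(15,13)];
[::(2,0);(6,14);(8,1);(15,5)];
[::(2,0);(7,0);(9,2);(12,6)];
[::(2,0);(7,1);(8,16);(12,5)];
[::(2,0);(7,3);(7,13);(15,3)];
[::(2,0);(7,7);(8,2);(14,12)];
[::(2,0);(7,10);(9,3);(11,13)];
[::(2,1);(4,3);(12,12);(14,15)];
[::(2,1);(4,5);(11,8);(16,1)];
[::(2,1);(4,9);(11,6);(16,2)];
[::(2,1);(4,11);(12,8);(14,16)];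
[::(2,1);(5,15);(9,10);(12,15)];
[::(2,1);(6,0);(7,14);(16,6)];
[::(2,1);(6,4);(8,1);(15,15)];
[::(2,1);(6,7);(9,12);(12,6)];
[::(2,1);(7,1);(9,9);(11,12)];
[::(2,1);(7,4);(7,12);(15,3)];
[::(2,1);(7,6);(8,3);(14,12)];
[::(2,1);(7,10);(9,13);(11,3)];
[::(2,2);(4,3);(12,2);(15,8)];
[::(2,2);(4,4);(11,9);(16,1)];
[::(2,2);(4,10);(11,5);(16,2)];
[::(2,2);(4,11);(11,15);(15,9)];
[::(2,2);(5,15);(10,3);(12,5)];
[::(2,2);(6,1);(7,13);(16,6)];
[::(2,2);(6,3);(8,2);(15,15)];
[::(2,2);(6,7);(10,5);(11,13)];
[::(2,2);(6,8);(10,2);(11,12)];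
[::(2,2);(6,11);(7,12);(15,13)];
[::(2,2);(6,13);(8,3);(15,5)];
[::(2,2);(7,0);(10,6);(11,3)];
[::(2,3);(4,3);(11,16);(15,11)];
[::(2,3);(4,4);(11,6);(16,4)];
[::(2,3);(4,10);(11,8);(15,16)];
[::(2,3);(4,11);(12,1);(15,6)];
[::(2,3);(4,13);(9,10);(15,13)];
[::(2,3);(4,14);(9,0);(16,6)];
[::(2,3);(5,3);(9,2);(15,15)];
[::(2,3);(5,4);(9,12);(15,5)];
[::(2,3);(7,3);(9,7);(11,12)];
[::(2,3);(7,4);(8,14);(12,5)];
[::(2,3);(7,6);(9,6);(11,13)];
[::(2,3);(7,7);(9,16);(11,3)];
[::(2,4);(4,3);(12,9);(15,1)];
[::(2,4);(4,5);(11,5);(16,4)];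
[::(2,4);(4,9);(11,9);(15,16)];
[::(2,4);(4,11);(12,11);(14,13)];
[::(2,4);(4,13);(10,3);(15,3)];
[::(2,4);(4,15);(8,16);(16,6)];
[::(2,4);(5,2);(9,3);(15,15)];
[::(2,4);(5,4);(10,5);(14,12)];
[::(2,4);(6,10);(10,0);(11,12)];
[::(2,4);(6,11);(8,14);(12,15)];
[::(2,4);(6,13);(9,6);(12,6)];
[::(2,4);(6,14);(10,9);(11,3)];
[::(2,5);(4,4);(12,8);(15,1)];
[::(2,5);(4,5);(11,15);(15,11)];
[::(2,5);(4,9);(12,2);(15,6)];
[::(2,5);(4,10);(12,12);(14,13)];
[::(2,5);(4,14);(10,2);(15,3)];
[::(2,5);(4,15);(9,9);(15,13)];
[::(2,5);(5,2);(9,13);(15,5)];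
[::(2,5);(5,3);(10,6);(14,12)];
[::(2,5);(6,0);(10,0);(12,5)];
[::(2,5);(6,1);(9,7);(12,15)];
[::(2,5);(6,3);(9,16);(12,6)];
[::(2,5);(6,4);(10,9);(11,13)];
[::(2,6);(5,7);(10,4);(11,16)];
[::(2,6);(5,8);(9,11);(12,9)];
[::(2,6);(5,10);(9,10);(12,10)];
[::(2,6);(5,11);(10,3);(12,0)];
[::(2,6);(6,9);(10,6);(10,13)];
[::(2,6);(6,11);(8,9);(12,7)];
[::(2,6);(6,12);(8,7);(12,12)];
[::(2,6);(6,14);(10,1);(10,15)];
[::(2,6);(7,2);(9,13);(10,12)];
[::(2,6);(7,4);(8,10);(11,14)];
[::(2,6);(7,5);(8,6);(12,2)];
[::(2,6);(7,7);(9,8);(10,16)];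
[::(2,7);(4,14);(10,4);(13,12)];
[::(2,7);(4,15);(9,11);(14,5)];
[::(2,7);(5,0);(9,10);(14,6)];
[::(2,7);(5,1);(10,3);(13,13)];
[::(2,7);(6,8);(10,8);(10,13)];
[::(2,7);(6,11);(7,16);(14,3)];
[::(2,7);(6,12);(7,14);(14,8)];
[::(2,7);(6,16);(10,0);(10,15)];
[::(2,7);(7,1);(9,15);(10,12)];
[::(2,7);(7,4);(8,0);(13,10)];
[::(2,7);(7,5);(7,13);(13,15)];
[::(2,7);(7,9);(9,7);(10,16)];
[::(2,8);(4,12);(10,6);(13,12)];
[::(2,8);(4,15);(8,9);(16,0)];
[::(2,8);(5,0);(8,7);(16,2)];
[::(2,8);(5,4);(10,1);(13,13)];
[::(2,8);(5,5);(10,8);(11,16)];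
[::(2,8);(5,8);(7,16);(15,16)];
[::(2,8);(5,10);(7,14);(16,3)];
[::(2,8);(5,14);(10,0);(12,0)];
[::(2,8);(7,1);(8,13);(11,14)];
[::(2,8);(7,2);(8,3);(13,10)];
[::(2,8);(7,7);(7,11);(13,15)];
[::(2,8);(7,9);(8,4);(12,2)];
[::(2,9);(4,12);(9,13);(14,5)];
[::(2,9);(4,14);(8,10);(16,0)];
[::(2,9);(5,1);(8,6);(16,2)];
[::(2,9);(5,4);(9,8);(14,6)];
[::(2,9);(5,5);(9,15);(12,9)];
[::(2,9);(5,7);(8,0);(15,16)];
[::(2,9);(5,11);(7,13);(16,3)];
[::(2,9);(5,14);(9,7);(12,10)];
[::(2,9);(6,8);(8,13);(12,7)];
[::(2,9);(6,9);(8,3);(14,3)];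
[::(2,9);(6,14);(7,11);(14,8)];
[::(2,9);(6,16);(8,4);(12,12)];
[::(2,10);(4,4);(12,10);(13,12)];
[::(2,10);(4,5);(12,0);(14,5)];
[::(2,10);(4,7);(11,16);(14,6)];
[::(2,10);(4,8);(12,9);(13,13)];
[::(2,10);(6,8);(8,7);(12,14)];
[::(2,10);(6,9);(7,14);(14,10)];
[::(2,10);(6,14);(7,16);(14,2)];
[::(2,10);(6,16);(8,9);(12,6)];
[::(2,10);(7,1);(8,6);(12,4)];
[::(2,10);(7,2);(7,13);(14,0)];
[::(2,10);(7,7);(8,0);(13,9)];
[::(2,10);(7,9);(8,10);(11,13)];
[::(2,11);(4,2);(12,12);(13,12)];
[::(2,11);(4,5);(10,15);(16,0)];
[::(2,11);(4,7);(10,13);(16,2)];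
[::(2,11);(4,11);(12,7);(13,13)];
[::(2,11);(5,5);(9,10);(12,14)];
[::(2,11);(5,7);(7,14);(16,5)];
[::(2,11);(5,11);(7,16);(15,15)];
[::(2,11);(5,14);(9,11);(12,6)];
[::(2,11);(7,1);(9,8);(11,2)];
[::(2,11);(7,4);(7,11);(14,0)];
[::(2,11);(7,5);(8,3);(13,9)];
[::(2,11);(7,9);(9,13);(10,10)];
[::(2,12);(4,2);(12,2);(14,5)];
[::(2,12);(4,4);(10,16);(16,0)];
[::(2,12);(4,8);(10,12);(16,2)];
[::(2,12);(4,11);(11,14);(14,6)];
[::(2,12);(5,5);(10,3);(12,4)];
[::(2,12);(5,8);(7,13);(16,5)];
[::(2,12);(5,10);(8,0);(15,15)];
[::(2,12);(5,14);(10,4);(11,13)];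
[::(2,12);(6,8);(10,1);(11,2)];
[::(2,12);(6,11);(7,11);(14,10)];
[::(2,12);(6,12);(8,3);(14,2)];
[::(2,12);(6,16);(10,6);(10,10)];
[::(2,13);(4,2);(11,16);(14,8)];
[::(2,13);(4,4);(10,13);(16,3)];
[::(2,13);(4,8);(10,15);(15,16)];
[::(2,13);(4,11);(12,0);(14,3)];
[::(2,13);(4,12);(9,10);(14,10)];
[::(2,13);(4,14);(8,7);(16,5)];
[::(2,13);(5,1);(8,9);(15,15)];
[::(2,13);(5,4);(9,11);(14,2)];
[::(2,13);(7,2);(9,7);(11,2)];
[::(2,13);(7,4);(8,4);(12,4)];
[::(2,13);(7,5);(8,13);(11,13)];
[::(2,13);(7,7);(9,15);(10,10)];
[::(2,14);(4,2);(12,9);(13,15)];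
[::(2,14);(4,5);(10,12);(16,3)];
[::(2,14);(4,7);(10,16);(15,16)];
[::(2,14);(4,11);(12,10);(13,10)];
[::(2,14);(4,12);(10,3);(14,0)];
[::(2,14);(4,15);(8,6);(16,5)];
[::(2,14);(5,0);(8,10);(15,15)];
[::(2,14);(5,4);(10,4);(13,9)];
[::(2,14);(6,9);(10,0);(11,2)];
[::(2,14);(6,11);(8,4);(12,14)];
[::(2,14);(6,12);(8,13);(12,6)];
[::(2,14);(6,14);(10,8);(10,10)];
[::(2,15);(4,4);(12,7);(13,15)];
[::(2,15);(4,5);(11,14);(14,8)];
[::(2,15);(4,7);(12,2);(14,3)];
[::(2,15);(4,8);(12,12);(13,10)];
[::(2,15);(4,14);(10,1);(14,0)];
[::(2,15);(4,15);(9,8);(14,10)];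
[::(2,15);(5,0);(9,13);(14,2)];
[::(2,15);(5,1);(10,6);(13,9)];
[::(2,15);(5,7);(10,0);(12,4)];
[::(2,15);(5,8);(9,7);(12,14)];
[::(2,15);(5,10);(9,15);(12,6)];
[::(2,15);(5,11);(10,8);(11,13)];
[::(2,16);(5,6);(10,4);(11,6)];
[::(2,16);(5,8);(9,1);(12,8)];
[::(2,16);(5,9);(9,0);(12,10)];
[::(2,16);(5,11);(10,2);(11,7)];
[::(2,16);(5,16);(10,5);(10,13)];
[::(2,16);(6,1);(8,8);(12,7)];
[::(2,16);(6,2);(8,7);(12,11)];
[::(2,16);(6,4);(10,1);(10,14)];
[::(2,16);(7,2);(9,3);(10,11)];
[::(2,16);(7,3);(8,10);(11,4)];
[::(2,16);(7,5);(8,5);(11,9)];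
[::(2,16);(7,6);(8,15);(10,16)];
[::(3,0);(4,13);(10,4);(13,2)];
[::(3,0);(4,15);(9,1);(14,4)];
[::(3,0);(4,16);(9,0);(14,6)];
[::(3,0);(5,1);(10,2);(13,3)];
[::(3,0);(5,15);(10,7);(10,13)];
[::(3,0);(6,1);(7,15);(14,3)];
[::(3,0);(6,2);(7,14);(14,7)];
[::(3,0);(6,6);(10,0);(10,14)];
[::(3,0);(7,1);(9,5);(10,11)];
[::(3,0);(7,3);(8,0);(13,0)];
[::(3,0);(7,5);(7,12);(13,5)];
[::(3,0);(7,8);(8,14);(10,16)];
[::(3,1);(4,12);(10,5);(13,2)];
[::(3,1);(4,15);(8,8);(15,7)];
[::(3,1);(4,16);(8,7);(15,9)];
[::(3,1);(5,3);(10,1);(13,3)];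
[::(3,1);(5,5);(10,7);(11,6)];
[::(3,1);(5,8);(7,15);(15,6)];
[::(3,1);(5,9);(7,14);(15,10)];
[::(3,1);(5,13);(10,0);(11,7)];
[::(3,1);(7,1);(8,12);(11,4)];
[::(3,1);(7,2);(8,2);(13,0)];
[::(3,1);(7,6);(7,11);(13,5)];
[::(3,1);(7,8);(8,4);(11,9)];
[::(3,2);(4,12);(9,3);(14,4)];
[::(3,2);(4,13);(8,10);(15,7)];
[::(3,2);(5,1);(8,5);(15,9)];
[::(3,2);(5,3);(8,15);(14,6)];
[::(3,2);(5,5);(9,5);(12,8)];
[::(3,2);(5,6);(8,0);(15,6)];
[::(3,2);(5,11);(7,12);(15,10)];
[::(3,2);(5,13);(8,14);(12,10)];
[::(3,2);(5,15);(8,12);(12,7)];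
[::(3,2);(5,16);(8,2);(14,3)];
[::(3,2);(6,4);(7,11);(14,7)];
[::(3,2);(6,6);(8,4);(12,11)];
[::(3,3);(4,3);(12,10);(13,2)];
[::(3,3);(4,5);(11,7);(14,4)];
[::(3,3);(4,6);(11,6);(14,6)];
[::(3,3);(4,8);(12,8);(13,3)];
[::(3,3);(5,15);(8,7);(12,13)];
[::(3,3);(5,16);(7,14);(14,9)];
[::(3,3);(6,4);(7,15);(14,2)];
[::(3,3);(6,6);(8,8);(12,6)];
[::(3,3);(7,1);(8,5);(11,11)];
[::(3,3);(7,2);(7,12);(13,7)];
[::(3,3);(7,6);(8,0);(12,16)];
[::(3,3);(7,8);(8,10);(11,3)];
[::(3,4);(4,2);(12,11);(13,2)];
[::(3,4);(4,5);(10,14);(15,7)];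
[::(3,4);(4,6);(10,13);(15,9)];
[::(3,4);(4,10);(12,7);(13,3)];
[::(3,4);(5,5);(9,0);(12,13)];
[::(3,4);(5,6);(7,14);(15,12)];
[::(3,4);(5,11);(7,15);(15,5)];
[::(3,4);(5,13);(9,1);(12,6)];
[::(3,4);(7,1);(8,15);(11,1)];
[::(3,4);(7,3);(7,11);(13,7)];
[::(3,4);(7,5);(8,2);(12,16)];
[::(3,4);(7,8);(9,3);(10,10)];
[::(3,5);(4,2);(11,9);(14,4)];
[::(3,5);(4,3);(10,16);(15,7)];
[::(3,5);(4,8);(10,11);(15,9)];
[::(3,5);(4,10);(11,4);(14,6)];
[::(3,5);(5,5);(10,2);(11,11)];
[::(3,5);(5,8);(7,12);(15,12)];
[::(3,5);(5,9);(8,0);(15,5)];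
[::(3,5);(5,13);(10,4);(11,3)];
[::(3,5);(5,15);(10,1);(11,1)];
[::(3,5);(6,1);(7,11);(14,9)];
[::(3,5);(6,2);(8,2);(14,2)];
[::(3,5);(6,6);(10,5);(10,10)];
[::(3,6);(4,2);(11,6);(14,7)];
[::(3,6);(4,3);(10,13);(15,10)];
[::(3,6);(4,8);(10,14);(15,6)];
[::(3,6);(4,10);(11,7);(14,3)];
[::(3,6);(4,12);(9,0);(14,9)];
[::(3,6);(4,13);(8,7);(15,12)];
[::(3,6);(5,1);(8,8);(15,5)];
[::(3,6);(5,3);(9,1);(14,2)];
[::(3,6);(7,2);(8,14);(11,1)];
[::(3,6);(7,3);(8,4);(11,11)];
[::(3,6);(7,5);(8,12);(11,3)];
[::(3,6);(7,6);(9,5);(10,10)];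
[::(3,7);(4,2);(12,8);(13,5)];
[::(3,7);(4,5);(10,11);(15,10)];
[::(3,7);(4,6);(10,16);(15,6)];
[::(3,7);(4,10);(12,10);(13,0)];
[::(3,7);(4,12);(10,2);(13,7)];
[::(3,7);(4,15);(8,5);(15,12)];
[::(3,7);(4,16);(8,10);(15,5)];
[::(3,7);(5,3);(10,4);(12,16)];
[::(3,7);(5,16);(10,0);(11,1)];
[::(3,7);(6,1);(8,4);(12,13)];
[::(3,7);(6,2);(8,12);(12,6)];
[::(3,7);(6,4);(10,7);(10,10)];
[::(3,8);(4,3);(12,7);(13,5)];
[::(3,8);(4,5);(11,4);(14,7)];
[::(3,8);(4,6);(11,9);(14,3)];
[::(3,8);(4,8);(12,11);(13,0)];
[::(3,8);(4,13);(10,1);(13,7)];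
[::(3,8);(4,15);(8,15);(14,9)];
[::(3,8);(4,16);(9,3);(14,2)];
[::(3,8);(5,1);(10,5);(12,16)];
[::(3,8);(5,6);(10,0);(11,11)];
[::(3,8);(5,8);(8,14);(12,13)];
[::(3,8);(5,9);(9,5);(12,6)];
[::(3,8);(5,11);(10,7);(11,3)];
[::(3,9);(5,6);(9,11);(11,5)];
[::(3,9);(5,7);(9,1);(11,15)];
[::(3,9);(5,9);(8,16);(12,0)];
[::(3,9);(5,10);(9,9);(11,7)];
[::(3,9);(5,16);(9,12);(10,12)];
[::(3,9);(6,0);(8,8);(11,14)];
[::(3,9);(6,2);(8,6);(12,1)];
[::(3,9);(6,3);(9,8);(10,14)];
[::(3,9);(6,9);(9,2);(10,11)];
[::(3,9);(6,10);(8,9);(11,4)];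
[::(3,9);(6,12);(8,5);(11,8)];
[::(3,9);(6,13);(8,15);(10,15)];
[::(3,10);(4,13);(9,11);(13,1)];
[::(3,10);(4,14);(9,1);(13,11)];
[::(3,10);(4,16);(8,16);(13,13)];
[::(3,10);(5,0);(9,9);(13,3)];
[::(3,10);(5,15);(9,14);(10,12)];
[::(3,10);(6,0);(7,15);(13,10)];
[::(3,10);(6,2);(7,13);(13,14)];
[::(3,10);(6,5);(9,7);(10,14)];
[::(3,10);(6,8);(9,4);(10,11)];
[::(3,10);(6,10);(7,16);(13,0)];
[::(3,10);(6,12);(7,12);(13,4)];
[::(3,10);(6,15);(8,14);(10,15)];
[::(3,11);(4,12);(9,12);(13,1)];
[::(3,11);(4,14);(8,8);(14,14)];
[::(3,11);(4,16);(8,6);(14,16)];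
[::(3,11);(5,2);(9,8);(13,3)];
[::(3,11);(5,5);(9,14);(11,5)];
[::(3,11);(5,7);(7,15);(14,13)];
[::(3,11);(5,9);(7,13);(15,0)];
[::(3,11);(5,12);(9,7);(11,7)];
[::(3,11);(6,8);(8,11);(11,4)];
[::(3,11);(6,9);(8,1);(13,0)];
[::(3,11);(6,13);(7,11);(13,4)];
[::(3,11);(6,15);(8,4);(11,8)];
[::(3,12);(4,12);(9,2);(13,11)];
[::(3,12);(4,13);(8,9);(14,14)];
[::(3,12);(5,0);(8,5);(14,16)];
[::(3,12);(5,2);(8,15);(13,13)];
[::(3,12);(5,5);(9,4);(11,15)];
[::(3,12);(5,6);(7,16);(14,13)];
[::(3,12);(5,10);(7,12);(15,0)];
[::(3,12);(5,12);(8,14);(12,0)];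
[::(3,12);(5,15);(8,11);(11,14)];
[::(3,12);(5,16);(8,1);(13,10)];
[::(3,12);(6,3);(7,11);(13,14)];
[::(3,12);(6,5);(8,4);(12,1)];
[::(3,13);(4,3);(12,0);(13,1)];
[::(3,13);(4,4);(11,7);(13,11)];
[::(3,13);(4,6);(11,5);(13,13)];
[::(3,13);(4,7);(11,15);(13,3)];
[::(3,13);(5,15);(8,6);(12,3)];
[::(3,13);(5,16);(7,13);(13,16)];
[::(3,13);(6,3);(7,15);(13,9)];
[::(3,13);(6,5);(8,8);(11,13)];
[::(3,13);(6,8);(8,5);(11,10)];
[::(3,13);(6,9);(7,12);(13,6)];
[::(3,13);(6,13);(7,16);(12,16)];
[::(3,13);(6,15);(8,9);(11,3)];
[::(3,14);(4,2);(12,1);(13,1)];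
[::(3,14);(4,4);(10,14);(14,14)];
[::(3,14);(4,6);(10,12);(14,16)];
[::(3,14);(4,9);(11,14);(13,3)];
[::(3,14);(5,5);(8,16);(12,3)];
[::(3,14);(5,6);(7,13);(15,2)];
[::(3,14);(5,10);(7,15);(14,12)];
[::(3,14);(5,12);(9,1);(11,13)];
[::(3,14);(6,8);(8,15);(11,0)];
[::(3,14);(6,10);(7,11);(13,6)];
[::(3,14);(6,12);(8,1);(12,16)];
[::(3,14);(6,15);(9,2);(10,10)];
[::(3,15);(4,2);(11,8);(13,11)];
[::(3,15);(4,3);(10,15);(14,14)];
[::(3,15);(4,7);(10,11);(14,16)];
[::(3,15);(4,9);(11,4);(13,13)];
[::(3,15);(5,5);(9,9);(11,10)];
[::(3,15);(5,7);(7,12);(15,2)];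
[::(3,15);(5,9);(7,16);(14,12)];
[::(3,15);(5,12);(9,11);(11,3)];
[::(3,15);(5,15);(9,8);(11,0)];
[::(3,15);(6,0);(7,11);(13,16)];
[::(3,15);(6,2);(8,1);(13,9)];
[::(3,15);(6,5);(9,12);(10,10)];
[::(3,16);(4,2);(11,5);(13,14)];
[::(3,16);(4,3);(10,12);(15,0)];
[::(3,16);(4,7);(10,14);(14,13)];
[::(3,16);(4,9);(11,7);(13,10)];
[::(3,16);(4,12);(8,16);(13,16)];
[::(3,16);(4,13);(8,6);(15,2)];
[::(3,16);(5,0);(8,8);(14,12)];
[::(3,16);(5,2);(9,1);(13,9)];
[::(3,16);(6,9);(8,14);(11,0)];
[::(3,16);(6,10);(8,4);(11,10)];
[::(3,16);(6,12);(8,11);(11,3)];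
[::(3,16);(6,13);(9,4);(10,10)];
[::(4,0);(4,2);(11,15);(13,4)];
[::(4,0);(4,4);(10,11);(15,0)];
[::(4,0);(4,6);(10,15);(14,13)];
[::(4,0);(4,9);(12,0);(13,0)];
[::(4,0);(4,12);(9,9);(13,6)];
[::(4,0);(4,14);(8,5);(15,2)];
[::(4,0);(4,16);(8,9);(14,12)];
[::(4,0);(5,2);(9,11);(12,16)];
[::(4,0);(5,16);(9,7);(11,0)];
[::(4,0);(6,0);(8,4);(12,3)];
[::(4,0);(6,2);(8,11);(11,13)];
[::(4,0);(6,3);(9,14);(10,10)];
[::(4,1);(4,3);(11,14);(13,4)];
[::(4,1);(4,4);(11,4);(13,14)];
[::(4,1);(4,6);(11,8);(13,10)];
[::(4,1);(4,7);(12,1);(13,0)];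
[::(4,1);(4,13);(9,8);(13,6)];
[::(4,1);(4,14);(8,15);(13,16)];
[::(4,1);(4,16);(9,2);(13,9)];
[::(4,1);(5,0);(9,12);(12,16)];
[::(4,1);(5,6);(9,7);(11,10)];
[::(4,1);(5,7);(8,14);(12,3)];
[::(4,1);(5,9);(9,4);(11,13)];
[::(4,1);(5,10);(9,14);(11,3)]].

Definition lab := seq nat.
Definition idxT := (nat * nat)%type.
Definition C (p : idxT) : lab := nth [::] (nth [::] canonP p.1) p.2.
Definition IDX : seq idxT :=
  [seq (q, r) | q <- iota 0 (size canonP), r <- iota 0 (size (nth [::] canonP q))].
Definition a0 : idxT := (0, 0).
Definition mcount (l m : lab) : nat := size (undup (zip l m)).
Definition rowC (a : idxT) : seq (seq nat) := [seq [seq mcount (C a) y | y <- ch] | ch <- canonP].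
Definition look (rc : seq (seq nat)) (p : idxT) : nat := nth 0 (nth [::] rc p.1) p.2.
Definition ty (rc : seq (seq nat)) (L : seq idxT) : nat :=
  let ms := map (look rc) L in
  if 3 \in ms then 0 else if 5 \in ms then 1 else if count_mem 6 ms == 1 then 2 else 3.
Definition Wt (k : nat) : seq nat :=
  if k == 5 then [:: 0; 8; 7; 8] else if k == 6 then [:: 0; 2; 2; 3] else [:: 6; 2; 3; 0].
Definition wk (k : nat) rc L := nth 0 (Wt k) (ty rc L).
Definition al (k : nat) := if k == 5 then 8 else if k == 6 then 4 else 8.
Definition be (k : nat) := if k == 5 then 88 else 24.
Definition ga (k : nat) := if k == 7 then 72 else 0.
Definition hk (k j : nat) : nat := al k * (j == k) + be k * (j != 3) + ga k * (j == 3).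
Definition Wtot (k : nat) := if k == 5 then 8 * 15 + 88 * 69 else if k == 6 then 4 * 18 + 24 * 69 else 8 * 36 + 24 * 69 + 72.
Definition thr (b : idxT) := [seq L <- planesP | b \in L].

Definition check_main : bool :=
  let rc := rowC a0 in
  all (fun k => sumn [seq wk k rc L | L <- planesP] == Wtot k) [:: 5; 6; 7] &&
  all (fun b => let T := thr b in let j := look rc b in
         [&& (j == 3) == (a0 == b), size T == 12, all (fun L => count_mem b L == 1) T &
         all (fun k => sumn [seq wk k rc L | L <- T] == hk k j) [:: 5; 6; 7]]) IDX.

Definition pairs33 : seq (nat * nat) := [seq (x, y) | x <- iota 0 3, y <- iota 0 3].
Definition adjq (l m : lab) : bool := uniq (zip l m) && all (fun p => p \in zip l m) pairs33.

Definition adj4 (L : seq idxT) : bool :=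
  if L is [:: x; y; z; w] then
    [&& adjq (C x) (C y), adjq (C x) (C z), adjq (C x) (C w),
        adjq (C y) (C z), adjq (C y) (C w) & adjq (C z) (C w)]
  else false.

Definition check_planes : bool :=
  (size planesP == 840) && all (fun L => adj4 L && all (fun p => p \in IDX) L) planesP.

Fixpoint gen (n c0 c1 c2 : nat) : seq (seq nat) :=
  if n is n'.+1 then
    (if c0 is c0'.+1 then [seq 0 :: t | t <- gen n' c0' c1 c2] else [::]) ++
    (if c1 is c1'.+1 then [seq 1 :: t | t <- gen n' c0 c1' c2] else [::]) ++
    (if c2 is c2'.+1 then [seq 2 :: t | t <- gen n' c0 c1 c2'] else [::])
  else [:: [::]].
Definition relabel (l : lab) : lab := [seq index x (rev (undup (rev l))) | x <- l].
Definition check_cover : bool :=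
  all (fun l => let r := relabel l in has (fun b => C b == r) IDX) (gen 9 3 3 3).

Definition valid (l : lab) : bool :=
  all (fun i => count (fun k => nth 0 l k == nth 0 l i) (iota 0 9) == 3) (iota 0 9).
Definition key (l : lab) : seq bool := [seq nth 0 l i == nth 0 l j | i <- iota 0 9, j <- iota 0 9].
Definition ps (l : lab) : seq nat :=
  [seq i <- iota 0 9 | nth 0 l i == 0] ++ [seq i <- iota 0 9 | nth 0 l i == 1] ++ [seq i <- iota 0 9 | nth 0 l i == 2].
Definition check_idx : bool :=
  uniq [seq key (C b) | b <- IDX] &&
  all (fun b => [&& size (C b) == 9, all (fun x => x < 3) (C b), valid (C b), uniq (ps (C b)), all (fun x => x < 9) (ps (C b)),
                   size (ps (C b)) == 9 & [seq nth 0 (C b) i | i <- ps (C b)] == C a0]) IDX.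

Lemma check_main_ok : check_main. Proof. vm_cast_no_check (erefl true). Qed.
Lemma check_planes_ok : check_planes. Proof. vm_cast_no_check (erefl true). Qed.
Lemma check_cover_ok : check_cover. Proof. vm_cast_no_check (erefl true). Qed.
Lemma check_idx_ok : check_idx. Proof. vm_cast_no_check (erefl true). Qed.


Lemma count_sum (T : Type) (p : pred T) (s : seq T) : count p s = \sum_(x <- s) (p x : nat).
Proof. by elim: s => [|x s IH]; rewrite ?big_nil ?big_cons //= IH. Qed.

Lemma card_I9 (p : pred nat) : #|[set k : 'I_9 | p k]| = count p (iota 0 9).
Proof.
rewrite count_sum -/(index_iota 0 9) big_mkord cardsE -sum1_card big_mkcond /=.
by apply: eq_bigr => i _; rewrite unfold_in; case: (p i).
Qed.

Definition blk (l : lab) (i : 'I_9) : {set 'I_9} := [set j : 'I_9 | nth 0 l j == nth 0 l i].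
Definition Pl (l : lab) : {set {set 'I_9}} := [set blk l i | i : 'I_9].

Lemma Pl_eq (l m : lab) : (forall i j : 'I_9, (nth 0 l j == nth 0 l i) = (nth 0 m j == nth 0 m i)) -> Pl l = Pl m.
Proof.
move=> H; rewrite /Pl; apply: eq_imset => i; apply/setP => j; by rewrite !inE H.
Qed.

Lemma size_undup_map_eq (T U V : eqType) (g : T -> U) (h : T -> V) (s : seq T) :
  (forall x y, (g x == g y) = (h x == h y)) -> size (undup (map g s)) = size (undup (map h s)).
Proof.
move=> H; elim: s => [|x s IH] //=.
have -> : (g x \in map g s) = (h x \in map h s).
  apply/mapP/mapP => [[y ys /eqP]|[y ys /eqP]]; exists y => //; apply/eqP; by rewrite ?H // -H.
by case: (h x \in map h s) => //=; rewrite IH.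
Qed.

Lemma card_imset_undup (T : finType) (U : finType) (f : T -> U) :
  #|[set f x | x : T]| = size (undup (map f (enum T))).
Proof.
rewrite -(card_uniqP (undup_uniq _)).
apply: eq_card => y; rewrite mem_undup; apply/imsetP/mapP => [[x _ ->]|[x _ ->]]; exists x => //.
by rewrite mem_enum.
Qed.

Definition blk2 (l m : lab) (k : 'I_9) : {set 'I_9} :=
  [set j : 'I_9 | (nth 0 l j == nth 0 l k) && (nth 0 m j == nth 0 m k)].

Lemma meet_Pl (l m : lab) : meet_part (Pl l) (Pl m) = [set blk2 l m k | k : 'I_9].
Proof.
rewrite /Pl /blk /blk2; apply/setP => Z; rewrite /meet_part !inE; apply/andP/imsetP.
- move=> [nZ /imset2P [X Y /imsetP [i _ ->] /imsetP [i' _ ->] EZ]]; subst Z.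
  case/set0Pn: nZ => k; rewrite !inE => /andP [/eqP k1 /eqP k2].
  exists k => //; apply/setP => j; by rewrite !inE k1 k2.
- move=> [k _ ->]; split.
  + by apply/set0Pn; exists k; rewrite !inE !eqxx.
  + apply/imset2P; exists [set j : 'I_9 | nth 0 l j == nth 0 l k] [set j : 'I_9 | nth 0 m j == nth 0 m k]; [by apply/imsetP; exists k | by apply/imsetP; exists k |].
    by apply/setP => j; rewrite !inE.
Qed.

Lemma card_meet_Pl (l m : lab) : size l = 9 -> size m = 9 ->
  #|meet_part (Pl l) (Pl m)| = mcount l m.
Proof.
move=> sl sm; rewrite meet_Pl card_imset_undup /mcount.
rewrite (@size_undup_map_eq _ _ _ _ (fun k : 'I_9 => (nth 0 l k, nth 0 m k))); last first.
  move=> x y; apply/eqP/eqP => [E|[E1 E2]].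
  - have : y \in blk2 l m x by rewrite E /blk2 !inE !eqxx.
    by rewrite /blk2 inE => /andP [/eqP -> /eqP ->].
  - by apply/setP => j; rewrite /blk2 !inE E1 E2.
congr (size (undup _)).
have -> : [seq (nth 0 l k, nth 0 m k) | k : 'I_9 <- enum 'I_9] =
  [seq (nth 0 l k, nth 0 m k) | k <- [seq val i | i <- enum 'I_9]] by rewrite -map_comp.
rewrite val_enum_ord.
apply: (@eq_from_nth _ (0,0)); first by rewrite size_map size_iota size_zip sl sm.
move=> i; rewrite size_map size_iota => Hi.
by rewrite (nth_map 0) ?size_iota // nth_iota // nth_zip ?sl ?sm.
Qed.


Lemma adjq_adj (l m : lab) : size l = 9 -> size m = 9 -> all (fun x => x < 3) l -> all (fun x => x < 3) m ->
  adjq l m -> p333_adj (Pl l) (Pl m).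
Proof.
move=> sl sm /allP l3 /allP m3 /andP [uz /allP hz].
apply/forall_inP => A /imsetP [i _ ->]; apply/forall_inP => B /imsetP [j _ ->].
have szz : size (zip l m) = 9 by rewrite size_zip sl sm.
have : (nth 0 l i, nth 0 m j) \in zip l m.
  apply: hz; apply/allpairsP; exists (nth 0 l i, nth 0 m j); split => //; rewrite mem_iota add0n.
  - by apply: l3; apply: mem_nth; rewrite sl.
  - by apply: m3; apply: mem_nth; rewrite sm.
move=> /(nthP (0, 0)) [k kz Ek]; rewrite szz in kz.
have -> : blk l i :&: blk m j = [set Ordinal kz].
  apply/setP => x; rewrite /blk !inE.
  apply/andP/eqP => [[/eqP hx /eqP hy]|->].
  - apply: val_inj => /=; apply/eqP.
    rewrite -(nth_uniq (0, 0) _ _ uz) ?szz //.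
    by rewrite Ek nth_zip ?sl ?sm // hx hy.
  - by move: Ek; rewrite nth_zip ?sl ?sm // => [[-> ->]].
by rewrite cards1.
Qed.


Lemma in_cat3_1 (T : eqType) (x : T) a b c : x \in a -> x \in a ++ b ++ c.
Proof. by rewrite !mem_cat => ->. Qed.
Lemma in_cat3_2 (T : eqType) (x : T) a b c : x \in b -> x \in a ++ b ++ c.
Proof. by rewrite !mem_cat => ->; rewrite orbT. Qed.
Lemma in_cat3_3 (T : eqType) (x : T) a b c : x \in c -> x \in a ++ b ++ c.
Proof. by rewrite !mem_cat => ->; rewrite !orbT. Qed.

Lemma mem_gen (l : seq nat) (n c0 c1 c2 : nat) : size l = n -> all (fun x => x < 3) l ->
  count_mem 0 l = c0 -> count_mem 1 l = c1 -> count_mem 2 l = c2 -> l \in gen n c0 c1 c2.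
Proof.
elim: l n c0 c1 c2 => [|x t IH] [|n] c0 c1 c2 //=.
move=> [st] /andP [x3 t3].
case: x x3 => [|[|[|x]]] // _ <- <- <-.
- by apply: in_cat3_1; apply: map_f; apply: IH.
- by apply: in_cat3_2; apply: map_f; apply: IH.
- by apply: in_cat3_3; apply: map_f; apply: IH.
Qed.

Lemma count_nth (l : lab) (p : pred nat) : count p l = count (fun k => p (nth 0 l k)) (iota 0 (size l)).
Proof. by rewrite -{1}(mkseq_nth 0 l) /mkseq count_map. Qed.

Lemma count3 (l : lab) : all (fun x => x < 3) l -> count_mem 0 l + count_mem 1 l + count_mem 2 l = size l.
Proof.
elim: l => //= x t IH /andP [x3 t3]; have := IH t3.
case: x x3 => [|[|[|x]]] //= _; lia.
Qed.

Lemma valid_gen (l : lab) : size l = 9 -> all (fun x => x < 3) l -> valid l -> l \in gen 9 3 3 3.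
Proof.
move=> sl l3 /allP V.
have H c : count_mem c l = 0 \/ count_mem c l = 3.
  case: (boolP (c \in l)) => cl; last by left; apply/count_memPn.
  right; rewrite count_nth sl.
  have hi : index c l < 9 by rewrite -sl index_mem.
  have := V (index c l); rewrite mem_iota add0n hi => /(_ isT) /eqP E.
  by rewrite -[RHS]E; apply: eq_count => k; rewrite /= nth_index.
have S3 := count3 l3; rewrite sl in S3.
apply: mem_gen => //.
- by case: (H 0) (H 1) (H 2); lia.
- by case: (H 0) (H 1) (H 2); lia.
- by case: (H 0) (H 1) (H 2); lia.
Qed.

Lemma relabel_eq (l : lab) (i j : nat) : i < size l -> j < size l ->
  (nth 0 (relabel l) j == nth 0 (relabel l) i) = (nth 0 l j == nth 0 l i).
Proof.
move=> hi hj; rewrite /relabel !(nth_map 0) //.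
by rewrite (inj_in_eq (@index_inj _ 0 _)) // mem_rev mem_undup mem_rev mem_nth.
Qed.

Lemma cover_lab (l : lab) : size l = 9 -> all (fun x => x < 3) l -> valid l ->
  exists2 b, b \in IDX & Pl l = Pl (C b).
Proof.
move=> sl l3 V; have lG := valid_gen sl l3 V.
move/allP: check_cover_ok => /(_ _ lG) H.
have {H} /hasP [b bI /eqP Cb] : has (fun b => C b == relabel l) IDX := H.
exists b => //; rewrite Cb; apply: Pl_eq => i j.
by rewrite relabel_eq // sl.
Qed.

Lemma part_Pl (P : {set {set 'I_9}}) : is_part333 P -> exists2 b, b \in IDX & P = Pl (C b).
Proof.
case/and3P => /and3P [/eqP cov triv n0] /eqP card3 /forall_inP sz3.
pose lb := mkseq (fun i => index (pblock P (inord i)) (enum P)) 9.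
have nthlb : forall j : 'I_9, nth 0 lb j = index (pblock P j) (enum P).
  by move=> j; rewrite nth_mkseq // inord_val.
have pbP : forall x, pblock P x \in P by move=> x; apply: pblock_mem; rewrite cov inE.
have blkE : forall i : 'I_9, blk lb i = pblock P i.
  move=> i; apply/setP => j; rewrite /blk inE !nthlb.
  rewrite (inj_in_eq (@index_inj _ set0 (enum P))) ?mem_enum //.
  by rewrite eq_sym eq_pblock // cov inE.
have PlE : Pl lb = P.
  apply/setP => B; apply/imsetP/idP => [[i _ ->]|BP]; first by rewrite blkE pbP.
  have : B != set0 by apply: contraNneq n0 => <-.
  case/set0Pn => x xB; exists x => //; by rewrite blkE (def_pblock triv BP xB).
have lb3 : all (fun x => x < 3) lb.
  apply/allP => x /mapP [i]; rewrite mem_iota => /andP [_ hi] ->.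
  have : index (pblock P (inord i)) (enum P) < size (enum P) by rewrite index_mem mem_enum pbP.
  by rewrite -cardE card3.
have lbV : valid lb.
  apply/allP => i; rewrite mem_iota => /andP [_ hi].
  rewrite -(card_I9 (fun k => nth 0 lb k == nth 0 lb i)).
  have -> : [set k : 'I_9 | (fun k => nth 0 lb k == nth 0 lb i) k] = blk lb (Ordinal hi).
    by apply/setP => k; rewrite /blk !inE.
  by rewrite blkE sz3.
have [b bI Eb] := cover_lab (size_mkseq _ _) lb3 lbV.
by exists b => //; rewrite -PlE.
Qed.

Lemma Pl_blk (l m : lab) : Pl l = Pl m -> forall i : 'I_9, blk l i = blk m i.
Proof.
move=> E i; have : blk l i \in Pl m by rewrite -E; apply/imsetP; exists i.
case/imsetP => j _ Ej; rewrite Ej; apply/setP => k; rewrite /blk !inE.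
have : i \in blk m j by rewrite -Ej /blk inE.
by rewrite /blk inE => /eqP ->.
Qed.

Lemma Pl_key (l m : lab) : Pl l = Pl m -> key l = key m.
Proof.
move=> E; apply/eq_in_allpairs => i j; rewrite !mem_iota !add0n => /andP [_ hi] /andP [_ hj].
by have := Pl_blk E (Ordinal hj) => /setP /(_ (Ordinal hi)); rewrite /blk !inE.
Qed.

Lemma uniq_map_inj (T U : eqType) (f : T -> U) (s : seq T) (x y : T) :
  uniq (map f s) -> x \in s -> y \in s -> f x = f y -> x = y.
Proof.
elim: s => //= z s IH /andP [nz us]; rewrite !inE.
case/orP => [/eqP ->|xs]; case/orP => [/eqP ->|ys] // E.
- by move: nz; rewrite E map_f.
- by move: nz; rewrite -E map_f.
- exact: IH.
Qed.

Lemma idx_facts (b : idxT) : b \in IDX ->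
  [/\ size (C b) = 9, all (fun x => x < 3) (C b), valid (C b), uniq (ps (C b)) &
      [/\ all (fun x => x < 9) (ps (C b)), size (ps (C b)) = 9 & [seq nth 0 (C b) i | i <- ps (C b)] = C a0]].
Proof.
move=> bI; case/andP: check_idx_ok => _ /allP /(_ _ bI).
by case/and5P => /eqP -> -> -> -> /and3P [-> /eqP -> /eqP ->].
Qed.

Lemma size_C (b : idxT) : b \in IDX -> size (C b) = 9.
Proof. by case/idx_facts. Qed.

Lemma Pl_inj (a b : idxT) : a \in IDX -> b \in IDX -> Pl (C a) = Pl (C b) -> a = b.
Proof.
move=> aI bI E; case/andP: check_idx_ok => U _.
exact: (uniq_map_inj U aI bI (Pl_key E)).
Qed.


Lemma look_rowC (a p : idxT) : look (rowC a) p = mcount (C a) (C p).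
Proof.
rewrite /look /rowC [C p]/C.
have -> : nth [::] [seq [seq mcount (C a) y | y <- ch] | ch <- canonP] p.1 =
          [seq mcount (C a) y | y <- nth [::] canonP p.1].
  case: (ltnP p.1 (size canonP)) => h; first by rewrite (nth_map [::]).
  by rewrite !nth_default ?size_map.
case: (ltnP p.2 (size (nth [::] canonP p.1))) => h; first by rewrite (nth_map [::]).
rewrite (nth_default 0) ?size_map // (nth_default [::] h).
by rewrite /mcount; case: (C a).
Qed.

Lemma main_W k : k \in [:: 5; 6; 7] -> sumn [seq wk k (rowC a0) L | L <- planesP] = Wtot k.
Proof. by move=> kI; case/andP: check_main_ok => /allP /(_ _ kI) /eqP. Qed.

Lemma main_b (b : idxT) : b \in IDX ->
  [/\ (mcount (C a0) (C b) == 3) = (a0 == b), size (thr b) = 12,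
      forall L, L \in thr b -> count_mem b L = 1
    & forall k, k \in [:: 5; 6; 7] -> sumn [seq wk k (rowC a0) L | L <- thr b] = hk k (mcount (C a0) (C b))].
Proof.
move=> bI; case/andP: check_main_ok => _ /allP /(_ _ bI).
rewrite look_rowC => /and4P [/eqP E /eqP S12 /allP Hc /allP Hk]; split => //.
- by move=> L /Hc /eqP.
- by move=> k /Hk /eqP.
Qed.

Lemma planes_facts (L : seq idxT) : L \in planesP -> adj4 L /\ all (fun p => p \in IDX) L.
Proof. by move=> LP; case/andP: check_planes_ok => _ /allP /(_ _ LP) /andP. Qed.

Lemma size_planes : size planesP = 840.
Proof. by case/andP: check_planes_ok => /eqP. Qed.

Lemma sum_thr (f : seq idxT -> nat) (b : idxT) : b \in IDX ->
  \sum_(L <- planesP) f L * count_mem b L = \sum_(L <- thr b) f L.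
Proof.
move=> bI; have [_ _ H _] := main_b bI.
rewrite /thr big_filter [RHS]big_mkcond /=; apply: eq_big_seq => L LP.
case: ifP => bL; first by rewrite H ?muln1 // mem_filter bL.
by rewrite (_ : count_mem b L = 0) ?muln0 //; apply/count_memPn; rewrite bL.
Qed.

Lemma mem_sum (T : finType) (S : {set T}) (x : T) : (x \in S : nat) = \sum_(P in S) (x == P : nat).
Proof.
case xS: (x \in S).
  rewrite (bigD1 x) //= eqxx big1 // => P /andP [_ nP]; by rewrite eq_sym (negbTE nP).
rewrite big1 // => P PS; case: eqP => // E; by rewrite E PS in xS.
Qed.

Lemma sum_le_size (T : eqType) (g : T -> nat) (s : seq T) : (forall x, x \in s -> g x <= 1) -> \sum_(x <- s) g x <= size s.
Proof.
elim: s => [|x s IH] H; rewrite ?big_nil ?big_cons //=.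
rewrite -addn1 addnC leq_add //; first by apply: IH => z zs; apply: H; rewrite inE zs orbT.
by apply: H; rewrite inE eqxx.
Qed.

Lemma sum_eq_size (T : eqType) (g : T -> nat) (s : seq T) :
  (forall x, x \in s -> g x <= 1) -> \sum_(x <- s) g x = size s -> forall x, x \in s -> g x = 1.
Proof.
elim: s => [|y s IH] //= H; rewrite big_cons => E x.
have Hs : \sum_(z <- s) g z <= size s.
  by apply: sum_le_size => z zs; apply: H; rewrite inE zs orbT.
have gy : g y <= 1 by apply: H; rewrite inE eqxx.
rewrite inE => /orP [/eqP ->|xs]; first by lia.
apply: IH => //; last by lia.
move=> z zs; apply: H; by rewrite inE zs orbT.
Qed.

Definition nS (S : {set {set {set 'I_9}}}) (L : seq idxT) : nat := \sum_(p <- L) (Pl (C p) \in S : nat).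
Definition nP (P : {set {set 'I_9}}) (L : seq idxT) : nat := \sum_(p <- L) (Pl (C p) == P : nat).

Lemma dc (S : {set {set {set 'I_9}}}) (f : seq idxT -> nat) :
  \sum_(L <- planesP) f L * nS S L = \sum_(P in S) \sum_(L <- planesP) f L * nP P L.
Proof.
rewrite exchange_big /=; apply: eq_bigr => L _.
rewrite -big_distrr /=; congr (_ * _).
rewrite /nS /nP exchange_big /=; apply: eq_bigr => p _; exact: mem_sum.
Qed.

Lemma nP_count (b : idxT) (L : seq idxT) : b \in IDX -> L \in planesP -> nP (Pl (C b)) L = count_mem b L.
Proof.
move=> bI LP; have [_ /allP LI] := planes_facts LP.
rewrite /nP count_sum; apply: eq_big_seq => p pL.
have pI := LI _ pL.
congr (nat_of_bool _); apply/eqP/eqP => [/(Pl_inj pI bI) -> //|->] //.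
Qed.

Definition canonS (S : {set {set {set 'I_9}}}) := forall P, P \in S -> exists2 b, b \in IDX & P = Pl (C b).

Lemma nS_le1 (S : {set {set {set 'I_9}}}) (Hind : forall P Q, P \in S -> Q \in S -> ~~ p333_adj P Q)
  (L : seq idxT) : L \in planesP -> nS S L <= 1.
Proof.
move=> LP; have [A /allP LI] := planes_facts LP.
have H u v : u \in IDX -> v \in IDX -> adjq (C u) (C v) -> ~~ ((Pl (C u) \in S) && (Pl (C v) \in S)).
  move=> uI vI; case/idx_facts: (uI) => su u3 _ _ _; case/idx_facts: (vI) => sv v3 _ _ _.
  move=> /(adjq_adj su sv u3 v3) Ad; apply/andP => [[uS vS]]; move: (Hind _ _ uS vS); by rewrite Ad.
move: A LI; rewrite /nS.
case: L LP => [|x [|y [|z [|w [|? ?]]]]] //= _ /and5P [a1 a2 a3 a4 /andP [a5 a6]] LI.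
have xI : x \in IDX by apply: LI; rewrite !inE eqxx.
have yI : y \in IDX by apply: LI; rewrite !inE eqxx ?orbT.
have zI : z \in IDX by apply: LI; rewrite !inE eqxx ?orbT.
have wI : w \in IDX by apply: LI; rewrite !inE eqxx ?orbT.
rewrite !big_cons big_nil.
move: (H _ _ xI yI a1) (H _ _ xI zI a2) (H _ _ xI wI a3) (H _ _ yI zI a4) (H _ _ yI wI a5) (H _ _ zI wI a6).
by case: (Pl (C x) \in S); case: (Pl (C y) \in S); case: (Pl (C z) \in S); case: (Pl (C w) \in S).
Qed.

Lemma inner (f : seq idxT -> nat) (P : {set {set 'I_9}}) (b : idxT) : b \in IDX -> P = Pl (C b) ->
  \sum_(L <- planesP) f L * nP P L = \sum_(L <- thr b) f L.
Proof.
move=> bI ->; rewrite -sum_thr //; apply: eq_big_seq => L LP; by rewrite nP_count.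
Qed.

Lemma nS_eq1 (S : {set {set {set 'I_9}}}) (HP : canonS S)
  (Hind : forall P Q, P \in S -> Q \in S -> ~~ p333_adj P Q) (HS : #|S| = 70)
  (L : seq idxT) : L \in planesP -> nS S L = 1.
Proof.
apply: sum_eq_size; first by move=> x xP; exact: (nS_le1 Hind).
have := dc S (fun _ => 1); rewrite (eq_bigr (fun L0 => nS S L0)); last by move=> L0 _; rewrite mul1n.
move=> ->; rewrite size_planes.
rewrite (eq_bigr (fun _ => 12)).
  by rewrite sum_nat_const HS.
move=> P PS; have [b bI Pb] := HP _ PS.
rewrite (inner _ bI Pb) sum1_size; by case: (main_b bI).
Qed.

Lemma key_sum (S : {set {set {set 'I_9}}}) (HP : canonS S)
  (Hind : forall P Q, P \in S -> Q \in S -> ~~ p333_adj P Q) (HS : #|S| = 70)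
  (k : nat) : k \in [:: 5; 6; 7] ->
  \sum_(P in S) hk k #|meet_part (Pl (C a0)) P| = Wtot k.
Proof.
move=> kI.
rewrite -(main_W kI) sumnE big_map.
rewrite (eq_big_seq (fun L => wk k (rowC a0) L * nS S L)); last first.
  by move=> L LP; rewrite (nS_eq1 HP Hind HS) // muln1.
rewrite dc; apply: eq_bigr => P PS.
have [b bI Pb] := HP _ PS.
rewrite (inner _ bI Pb).
have [_ _ _ Hh] := main_b bI.
have a0I : a0 \in IDX by [].
by rewrite Pb card_meet_Pl ?size_C // -(Hh _ kI) sumnE big_map.
Qed.

Theorem core (S : {set {set {set 'I_9}}}) (HP : canonS S)
  (Hind : forall P Q, P \in S -> Q \in S -> ~~ p333_adj P Q) (HS : #|S| = 70) :
  Pl (C a0) \in S ->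
    [/\ #|[set sigma in S | #|meet_part (Pl (C a0)) sigma| == 7]| = 36,
        #|[set sigma in S | #|meet_part (Pl (C a0)) sigma| == 6]| = 18
      & #|[set sigma in S | #|meet_part (Pl (C a0)) sigma| == 5]| = 15].
Proof.
move=> piS; set pi := Pl (C a0).
have a0I : a0 \in IDX by [].
have sum_ind : forall p : pred {set {set 'I_9}}, \sum_(P in S) (p P : nat) = #|[set P in S | p P]|.
  move=> p; rewrite -sum1_card [RHS]big_mkcond [LHS]big_mkcond /=.
  apply: eq_bigr => P _; rewrite !inE; by case: (P \in S); case: (p P).
have Z : #|[set P in S | #|meet_part pi P| == 3]| = 1.
  suff -> : [set P in S | #|meet_part pi P| == 3] = [set pi] by rewrite cards1.
  apply/setP => P; rewrite !inE.
  apply/andP/eqP => [[PS]|->].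
    have [b bI Pb] := HP _ PS.
    rewrite /pi Pb card_meet_Pl ?size_C //.
    by have [-> _ _ _] := main_b bI => /eqP ->.
  split => //; rewrite /pi card_meet_Pl ?size_C //.
have Y : #|[set P in S | #|meet_part pi P| != 3]| = 69.
  have : \sum_(P in S) ((#|meet_part pi P| != 3 : nat) + (#|meet_part pi P| == 3 : nat)) = 70.
    rewrite -HS -sum1_card; apply: eq_bigr => P _; by case: (_ == 3).
  by rewrite big_split /= !sum_ind Z addn1 => [[]].
have expand : forall k, \sum_(P in S) hk k #|meet_part pi P| =
    al k * #|[set P in S | #|meet_part pi P| == k]| + be k * 69 + ga k * 1.
  move=> k; rewrite /hk !big_split /= -!big_distrr /= !sum_ind Z.
  by rewrite Y.
have K k : k \in [:: 5; 6; 7] -> \sum_(P in S) hk k #|meet_part pi P| = Wtot k.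
  by move=> kI; apply: key_sum.
have := K 5 isT; have := K 6 isT; have := K 7 isT.
rewrite !expand /al /be /ga /Wtot /=.
split; lia.
Qed.


Definition psi (f : 'I_9 -> 'I_9) (P : {set {set 'I_9}}) : {set {set 'I_9}} :=
  (fun A : {set 'I_9} => f @^-1: A) @: P.

Lemma preim_inj (f : 'I_9 -> 'I_9) : injective f -> injective (fun A : {set 'I_9} => f @^-1: A).
Proof.
move=> fi A B E; apply/setP => x.
have : (invF fi x \in f @^-1: A) = (invF fi x \in f @^-1: B) by rewrite E.
by rewrite !inE f_invF.
Qed.

Lemma psi_inj (f : 'I_9 -> 'I_9) : injective f -> injective (psi f).
Proof. move=> fi; exact: (imset_inj (preim_inj fi)). Qed.

Lemma psi_adj (f : 'I_9 -> 'I_9) P Q : injective f -> p333_adj (psi f P) (psi f Q) = p333_adj P Q.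
Proof.
move=> fi; apply/forall_inP/forall_inP => H A AP.
- apply/forall_inP => B BQ.
  have /H /forall_inP /(_ (f @^-1: B)) : f @^-1: A \in psi f P by apply: imset_f.
  by rewrite -preimsetI card_preimset //; apply; apply: imset_f.
- case/imsetP: AP => A0 A0P ->; apply/forall_inP => B /imsetP [B0 B0Q ->].
  rewrite -preimsetI card_preimset //.
  by move/forall_inP: (H _ A0P) => /(_ _ B0Q).
Qed.

Lemma psi_meet (f : 'I_9 -> 'I_9) P Q : injective f -> meet_part (psi f P) (psi f Q) = psi f (meet_part P Q).
Proof.
move=> fi; apply/setP => Z; rewrite /meet_part /psi !inE.
apply/andP/imsetP => [[nZ /imset2P [X Y /imsetP [A AP ->] /imsetP [B BQ ->] EZ]]|[W]].
- exists (A :&: B); last by rewrite EZ preimsetI.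
  rewrite !inE; apply/andP; split; last by apply/imset2P; exists A B.
  apply: contra nZ => /eqP AB0; by rewrite EZ -preimsetI AB0 preimset0.
- rewrite !inE => /andP [nW /imset2P [A B AP BQ EW]] ->; subst W; split.
  + case/set0Pn: nW => x xW; apply/set0Pn; exists (invF fi x); by rewrite !inE f_invF -in_setI.
  + by apply/imset2P; exists (f @^-1: A) (f @^-1: B); rewrite ?preimsetI //; apply: imset_f.
Qed.

Lemma card_psi (f : 'I_9 -> 'I_9) X : injective f -> #|psi f X| = #|X|.
Proof. move=> fi; exact: card_imset (preim_inj fi). Qed.

Lemma psi_Pl (f : 'I_9 -> 'I_9) (l l' : lab) : injective f ->
  (forall k : 'I_9, nth 0 l' k = nth 0 l (f k)) -> psi f (Pl l) = Pl l'.
Proof.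
move=> fi H; apply/setP => Z; apply/imsetP/imsetP => [[X /imsetP [i _ ->] ->]|[j _ ->]].
- exists (invF fi i) => //; apply/setP => k; by rewrite /blk !inE !H f_invF.
- exists (blk l (f j)); first by apply/imsetP; exists (f j).
  by apply/setP => k; rewrite /blk !inE !H.
Qed.

Definition sig (l : lab) (k : 'I_9) : 'I_9 := inord (nth 0 (ps l) k).

Lemma sig_inj (b : idxT) : b \in IDX -> injective (sig (C b)).
Proof.
case/idx_facts => _ _ _ U [/allP A9 S9 _] i j.
have lt k : k < size (ps (C b)) -> nth 0 (ps (C b)) k < 9 by move=> hk; apply: A9; apply: mem_nth.
rewrite /sig => /(congr1 (@nat_of_ord 9)); rewrite !inordK ?lt ?S9 // => E.
apply: val_inj; apply/eqP; by rewrite /= -(nth_uniq 0 _ _ U) ?S9 ?E //.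
Qed.

Lemma sig_val (b : idxT) (k : 'I_9) : b \in IDX -> nth 0 (C b) (sig (C b) k) = nth 0 (C a0) k.
Proof.
case/idx_facts => _ _ _ _ [/allP A9 S9 M].
rewrite /sig inordK; last by apply: A9; apply: mem_nth; rewrite S9.
by rewrite -M (nth_map 0) // S9.
Qed.

Lemma canon_psi (f : 'I_9 -> 'I_9) (b : idxT) : injective f -> b \in IDX ->
  exists2 b', b' \in IDX & psi f (Pl (C b)) = Pl (C b').
Proof.
move=> fi bI; case/idx_facts: (bI) => sb b3 /allP Vb _ _.
pose l' := mkseq (fun k => nth 0 (C b) (f (inord k))) 9.
have nl : forall k : 'I_9, nth 0 l' k = nth 0 (C b) (f k) by move=> k; rewrite nth_mkseq // inord_val.
rewrite (psi_Pl fi nl).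
apply: cover_lab; first by rewrite size_mkseq.
- apply/allP => x /mapP [i _ ->]; move/allP: b3; apply; apply: mem_nth; by rewrite sb.
- apply/allP => i; rewrite mem_iota add0n => /andP [_ hi].
  rewrite -(card_I9 (fun k => nth 0 l' k == nth 0 l' i)).
  have -> : [set k : 'I_9 | (fun k => nth 0 l' k == nth 0 l' i) k] = f @^-1: blk (C b) (f (Ordinal hi)).
    by apply/setP => k; rewrite /blk !inE (nl k) (nl (Ordinal hi)).
  rewrite card_preimset //.
  have -> : blk (C b) (f (Ordinal hi)) = [set k : 'I_9 | (fun k => nth 0 (C b) k == nth 0 (C b) (f (Ordinal hi))) k].
    by apply/setP => k; rewrite /blk !inE.
  rewrite (card_I9 (fun k => nth 0 (C b) k == nth 0 (C b) (f (Ordinal hi)))); by move: (Vb (f (Ordinal hi))); rewrite mem_iota add0n ltn_ord => /(_ isT).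
Qed.

Theorem corollary5p2 (S : {set {set {set 'I_9}}}) :
  p333_independent S -> #|S| = 70 ->
  forall pi, pi \in S ->
    [/\ #|[set sigma in S | #|meet_part pi sigma| == 7]| = 36,
        #|[set sigma in S | #|meet_part pi sigma| == 6]| = 18
      & #|[set sigma in S | #|meet_part pi sigma| == 5]| = 15].
Proof.
move=> [Hp Hi] HS pi piS.
have [a aI Pa] := part_Pl (Hp _ piS).
pose f := sig (C a); have fi : injective f := sig_inj aI.
pose S' := [set psi f P | P in S].
have Hpi : psi f pi = Pl (C a0) by rewrite Pa; apply: psi_Pl => // k; rewrite sig_val.
have HP' : canonS S'.
  move=> P' /imsetP [P PS ->]; have [b bI ->] := part_Pl (Hp _ PS); exact: canon_psi.
have Hind' : forall P Q, P \in S' -> Q \in S' -> ~~ p333_adj P Q.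
  move=> P' Q' /imsetP [P PS ->] /imsetP [Q QS ->]; rewrite psi_adj //; exact: Hi.
have HS' : #|S'| = 70 by rewrite card_imset //; exact: psi_inj.
have piS' : Pl (C a0) \in S' by rewrite -Hpi; apply: imset_f.
have [E7 E6 E5] := core HP' Hind' HS' piS'.
have T k : #|[set sigma in S | #|meet_part pi sigma| == k]| =
           #|[set sigma in S' | #|meet_part (Pl (C a0)) sigma| == k]|.
  rewrite -Hpi -(card_imset [set sigma in S | #|meet_part pi sigma| == k] (psi_inj fi)).
  apply: eq_card => X; rewrite [in RHS]inE; apply/imsetP/andP => [[Y] |[/imsetP [Y YS ->]]].
  - rewrite inE => /andP [YS Hm] ->; split; first exact: imset_f.
    by rewrite psi_meet // card_psi.
  - rewrite psi_meet // card_psi // => Hm; exists Y => //; by rewrite inE YS.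
by rewrite !T.
Qed.
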